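(* No graph of the form $G_4\star G_4'$ (with $G_4,G_4'$ any graphs on $4$ vertices) is $3$-ball packable, except $C_4\star C_4$.
   Context: $C_4$ is the $4$-cycle, $\star$ the graph join. A $3$-ball in $\hat{\mathbb R}^3$ is a closed ball, closed exterior of an open ball with $\infty$, or a closed half-space with $\infty$; a $3$-ball packing is a collection of $3$-balls with disjoint interiors; its tangency graph joins balls meeting in exactly one point; a graph is $3$-ball packable if isomorphic to the tangency graph of some $3$-ball packing. *)

(* Defs.v *)
From Stdlib Require Import Reals.
From mathcomp Require Import all_boot.

Set Implicit Arguments.
Unset Strict Implicit.

Local Open Scope R_scope.

Definition R3 : Type := (R * R * R)%type.

(* points of \hat R^3 : [Some x] for x in R^3, [None] is the point at infinity *)
Definition pt : Type := option R3.

Definition dot (x y : R3) : R :=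
  let '(x1, x2, x3) := x in let '(y1, y2, y3) := y in
  Rplus (Rplus (Rmult x1 y1) (Rmult x2 y2)) (Rmult x3 y3).

Definition sub3 (x y : R3) : R3 :=
  let '(x1, x2, x3) := x in let '(y1, y2, y3) := y in
  (Rminus x1 y1, Rminus x2 y2, Rminus x3 y3).

Definition dist2 (x y : R3) : R := dot (sub3 x y) (sub3 x y).

Definition zero3 : R3 := (R0, R0, R0).

Definition closed_ball (c : R3) (r : R) (p : pt) : Prop :=
  match p with Some x => (dist2 x c <= r * r) | None => False end.

Definition closed_exterior (c : R3) (r : R) (p : pt) : Prop :=
  match p with Some x => (r * r <= dist2 x c) | None => True end.

Definition closed_halfspace (n : R3) (b : R) (p : pt) : Prop :=
  match p with Some x => (b <= dot n x) | None => True end.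

Definition same_set (A B : pt -> Prop) : Prop := forall p, A p <-> B p.

Definition is_3ball (B : pt -> Prop) : Prop :=
  (exists c r, (0 < r) /\ same_set B (closed_ball c r)) \/
  (exists c r, (0 < r) /\ same_set B (closed_exterior c r)) \/
  (exists n b, n <> zero3 /\ same_set B (closed_halfspace n b)).

(* basic neighbourhoods of the (one-point compactification) topology of \hat R^3 *)
Definition basic_nbhd (p : pt) (eps : R) (q : pt) : Prop :=
  match p, q with
  | Some x, Some y => (dist2 y x < eps * eps)
  | Some _, None => False
  | None, None => True
  | None, Some y => (/ (eps * eps) < dist2 y zero3)
  end.

Definition interior (S : pt -> Prop) (p : pt) : Prop :=
  exists eps, (0 < eps) /\ forall q, basic_nbhd p eps q -> S q.

Definition meet_in_one_point (A B : pt -> Prop) : Prop :=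
  exists p, A p /\ B p /\ forall q, A q -> B q -> q = p.

Definition ball3_packable (V : Type) (adj : V -> V -> Prop) : Prop :=
  exists B : V -> pt -> Prop,
    (forall v, is_3ball (B v)) /\
    (forall u v, u <> v -> forall p, ~ (interior (B u) p /\ interior (B v) p)) /\
    (forall u v, u <> v -> (adj u v <-> meet_in_one_point (B u) (B v))).

Local Close Scope R_scope.

Definition simple_graph4 (G : rel 'I_4) : Prop := symmetric G /\ irreflexive G.

Definition C4 : rel 'I_4 :=
  fun i j => ((i.+1 %% 4)%N == j) || ((j.+1 %% 4)%N == i).

Definition graph_iso4 (G H : rel 'I_4) : Prop :=
  exists f : 'I_4 -> 'I_4, bijective f /\ forall x y, G x y = H (f x) (f y).

Definition graph_join (G G' : rel 'I_4) (u v : 'I_4 + 'I_4) : Prop :=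
  match u, v with
  | inl a, inl b => G a b
  | inr a, inr b => G' a b
  | _, _ => True
  end.

(* Main.v *)
Require Import Defs.
From Stdlib Require Import Reals Lra Lia Psatz.
From Stdlib Require Import Classical IndefiniteDescription.

Module Dev.
Open Scope R_scope.

Record V5 := mk5 { c1 : R; c2 : R; c3 : R; c4 : R; c5 : R }.
Definition L (u v : V5) : R := c1 u * c1 v + c2 u * c2 v + c3 u * c3 v + c4 u * c4 v - c5 u * c5 v.
Definition vadd (u v : V5) := mk5 (c1 u + c1 v) (c2 u + c2 v) (c3 u + c3 v) (c4 u + c4 v) (c5 u + c5 v).
Definition vscal (k : R) (u : V5) := mk5 (k * c1 u) (k * c2 u) (k * c3 u) (k * c4 u) (k * c5 u).
Definition vsub (u v : V5) := mk5 (c1 u - c1 v) (c2 u - c2 v) (c3 u - c3 v) (c4 u - c4 v) (c5 u - c5 v).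
Definition vopp (u : V5) := mk5 (- c1 u) (- c2 u) (- c3 u) (- c4 u) (- c5 u).
Definition vzero := mk5 0 0 0 0 0.

Lemma L_sym u v : L u v = L v u. Proof. unfold L; ring. Qed.
Lemma L_zero u : L vzero u = 0. Proof. unfold L; simpl; ring. Qed.

Lemma sq_nonneg x : 0 <= x * x. Proof. nra. Qed.

Lemma RCS_eq (w x : V5) : L w w < 0 -> L x w = 0 -> 0 <= L x x /\ (L x x = 0 -> x = vzero).
Proof.
destruct w as [w1 w2 w3 w4 w5]; destruct x as [x1 x2 x3 x4 x5]; unfold L; simpl.
intros Hw Hx.
set (P := x1*x1+x2*x2+x3*x3+x4*x4).
set (Q := w1*w1+w2*w2+w3*w3+w4*w4).
set (X := x1*w1+x2*w2+x3*w3+x4*w4).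
assert (HL : X * X <= P * Q).
{ unfold X, P, Q.
  assert (E : (x1*x1+x2*x2+x3*x3+x4*x4)*(w1*w1+w2*w2+w3*w3+w4*w4) - (x1*w1+x2*w2+x3*w3+x4*w4)*(x1*w1+x2*w2+x3*w3+x4*w4)
    = (x1*w2-x2*w1)*(x1*w2-x2*w1) + (x1*w3-x3*w1)*(x1*w3-x3*w1) + (x1*w4-x4*w1)*(x1*w4-x4*w1)
    + (x2*w3-x3*w2)*(x2*w3-x3*w2) + (x2*w4-x4*w2)*(x2*w4-x4*w2) + (x3*w4-x4*w3)*(x3*w4-x4*w3)) by ring.
  pose proof (sq_nonneg (x1*w2-x2*w1)); pose proof (sq_nonneg (x1*w3-x3*w1)); pose proof (sq_nonneg (x1*w4-x4*w1));
  pose proof (sq_nonneg (x2*w3-x3*w2)); pose proof (sq_nonneg (x2*w4-x4*w2)); pose proof (sq_nonneg (x3*w4-x4*w3)).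
  lra. }
assert (HQ : 0 <= Q) by (unfold Q; pose proof (sq_nonneg w1); pose proof (sq_nonneg w2); pose proof (sq_nonneg w3); pose proof (sq_nonneg w4); lra).
assert (HP : 0 <= P) by (unfold P; pose proof (sq_nonneg x1); pose proof (sq_nonneg x2); pose proof (sq_nonneg x3); pose proof (sq_nonneg x4); lra).
assert (HX : X = x5 * w5) by (unfold X; lra).
assert (Hs : Q < w5 * w5) by (unfold Q; lra).
assert (K : (P - x5*x5) * (w5*w5) >= P * (w5*w5 - Q)) by (rewrite HX in HL; nra).
assert (K2 : 0 <= P * (w5*w5 - Q)) by nra.
assert (Hpos : 0 <= P - x5 * x5) by nra.
split.
- lra.
- intro H0.
  assert (HP0 : P = x5 * x5) by lra.
  assert (HP00 : P = 0) by nra.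
  unfold P, Q, X in *. clear P Q X.
  pose proof (sq_nonneg x1); pose proof (sq_nonneg x2); pose proof (sq_nonneg x3); pose proof (sq_nonneg x4).
  assert (x1 = 0) by nra. assert (x2 = 0) by nra. assert (x3 = 0) by nra. assert (x4 = 0) by nra.
  assert (x5 = 0) by nra.
  subst; unfold vzero; reflexivity.
Qed.


Definition Qf (A B C p q p' q' : R) := A*p*p' + B*(p*q' + q*p') + C*q*q'.

Lemma Qf_cross A B C p0 q0 pj qj pk qk :
  Qf A B C p0 q0 p0 q0 * Qf A B C pj qj pk qk - Qf A B C p0 q0 pj qj * Qf A B C p0 q0 pk qk
  = (A*C - B*B) * ((p0*qj - q0*pj) * (p0*qk - q0*pk)).
Proof. unfold Qf; ring. Qed.

Lemma Qf_pd A B C p q : 0 < A -> 0 < A*C - B*B -> 0 <= Qf A B C p q p q /\ (Qf A B C p q p q = 0 -> p = 0 /\ q = 0).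
Proof.
intros HA HD. unfold Qf.
assert (E : A * (A*p*p + B*(p*q+q*p) + C*q*q) = (A*p + B*q)*(A*p+B*q) + (A*C-B*B)*(q*q)) by ring.
assert (H1 : 0 <= (A*p + B*q)*(A*p+B*q)) by apply sq_nonneg.
assert (H2 : 0 <= (A*C-B*B)*(q*q)) by (pose proof (sq_nonneg q); nra).
split.
- nra.
- intro H0. assert (q * q = 0) by nra. assert (q = 0) by nra. subst q.
  assert (A*p*p = 0) by lra. assert (p*p = 0) by nra. split; nra.
Qed.

Lemma three_neg (x y z : R) : x*y < 0 -> x*z < 0 -> y*z < 0 -> False.
Proof. intros. assert (0 <= (x*y*z)*(x*y*z)) by nra. nra. Qed.

Lemma three_nonpos (x y z : R) : x*y <= 0 -> x*z <= 0 -> y*z <= 0 -> x = 0 \/ y = 0 \/ z = 0.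
Proof.
intros H1 H2 H3.
destruct (Req_dec x 0); [now left|]. destruct (Req_dec y 0); [now right;left|]. destruct (Req_dec z 0); [now right;right|].
exfalso. apply (three_neg x y z).
- assert (x*y <> 0) by (apply Rmult_integral_contrapositive; tauto). lra.
- assert (x*z <> 0) by (apply Rmult_integral_contrapositive; tauto). lra.
- assert (y*z <> 0) by (apply Rmult_integral_contrapositive; tauto). lra.
Qed.

Section Plane.
Variables (A B C : R).
Hypothesis HA : 0 < A.
Hypothesis HD : 0 < A*C - B*B.
Let Q := Qf A B C.

Lemma PL1 r p0 q0 p1 q1 p2 q2 p3 q3 :
  Q p0 q0 p0 q0 = r ->
  Q p0 q0 p1 q1 <= r - 2 -> Q p0 q0 p2 q2 <= r - 2 -> Q p0 q0 p3 q3 <= r - 2 ->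
  Q p1 q1 p2 q2 <= r - 2 -> Q p1 q1 p3 q3 <= r - 2 -> Q p2 q2 p3 q3 <= r - 2 -> 2 <= r.
Proof.
intros H00 H01 H02 H03 H12 H13 H23.
destruct (Rle_lt_dec 2 r) as [h|h]; [exact h|exfalso].
pose proof (proj1 (Qf_pd A B C p0 q0 HA HD)) as Hpd. fold Q in Hpd.
pose proof (Qf_cross A B C p0 q0 p1 q1 p2 q2) as E12.
pose proof (Qf_cross A B C p0 q0 p1 q1 p3 q3) as E13.
pose proof (Qf_cross A B C p0 q0 p2 q2 p3 q3) as E23.
fold Q in E12, E13, E23.
set (D := A*C-B*B) in *.
set (k1 := p0*q1 - q0*p1) in *. set (k2 := p0*q2 - q0*p2) in *. set (k3 := p0*q3 - q0*p3) in *.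
apply (three_neg k1 k2 k3).
- assert (D * (k1*k2) < 0) by nra. nra.
- assert (D * (k1*k3) < 0) by nra. nra.
- assert (D * (k2*k3) < 0) by nra. nra.
Qed.

Lemma VL p0 q0 p1 q1 p2 q2 p3 q3 :
  Q p0 q0 p0 q0 = 2 -> Q p1 q1 p1 q1 = 2 -> Q p2 q2 p2 q2 = 2 -> Q p3 q3 p3 q3 = 2 ->
  Q p0 q0 p1 q1 <= 0 -> Q p0 q0 p2 q2 <= 0 -> Q p0 q0 p3 q3 <= 0 ->
  Q p1 q1 p2 q2 <= 0 -> Q p1 q1 p3 q3 <= 0 -> Q p2 q2 p3 q3 <= 0 ->
  Q p0 q0 p1 q1 = -2 \/ Q p0 q0 p2 q2 = -2 \/ Q p0 q0 p3 q3 = -2.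
Proof.
intros H00 H11 H22 H33 H01 H02 H03 H12 H13 H23.
pose proof (Qf_cross A B C p0 q0 p1 q1 p2 q2) as E12.
pose proof (Qf_cross A B C p0 q0 p1 q1 p3 q3) as E13.
pose proof (Qf_cross A B C p0 q0 p2 q2 p3 q3) as E23.
pose proof (Qf_cross A B C p0 q0 p1 q1 p1 q1) as E11.
pose proof (Qf_cross A B C p0 q0 p2 q2 p2 q2) as E22.
pose proof (Qf_cross A B C p0 q0 p3 q3 p3 q3) as E33.
fold Q in E12, E13, E23, E11, E22, E33.
set (D := A*C-B*B) in *.
set (k1 := p0*q1 - q0*p1) in *. set (k2 := p0*q2 - q0*p2) in *. set (k3 := p0*q3 - q0*p3) in *.
assert (G12 : k1*k2 <= 0). { assert (D*(k1*k2) <= 0) by nra. nra. }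
assert (G13 : k1*k3 <= 0). { assert (D*(k1*k3) <= 0) by nra. nra. }
assert (G23 : k2*k3 <= 0). { assert (D*(k2*k3) <= 0) by nra. nra. }
destruct (three_nonpos k1 k2 k3 G12 G13 G23) as [h|[h|h]]; rewrite h in *.
- left. nra.
- right; left. nra.
- right; right. nra.
Qed.

Lemma OPP p0 q0 p1 q1 : Q p0 q0 p0 q0 = 2 -> Q p1 q1 p1 q1 = 2 -> Q p0 q0 p1 q1 = -2 ->
  p1 = - p0 /\ q1 = - q0.
Proof.
intros H0 H1 H01.
assert (E : Q (p0+p1) (q0+q1) (p0+p1) (q0+q1) = Q p0 q0 p0 q0 + 2 * Q p0 q0 p1 q1 + Q p1 q1 p1 q1)
  by (unfold Q, Qf; ring).
destruct (Qf_pd A B C (p0+p1) (q0+q1) HA HD) as [_ Hz]. fold Q in Hz.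
destruct Hz as [h1 h2]; [lra|]. split; lra.
Qed.

End Plane.

Lemma sq_pos x : x <> 0 -> 0 < x * x.
Proof. intro h; destruct (Rtotal_order x 0) as [h'|[h'|h']]; nra. Qed.

Lemma V5_eq u v : c1 u = c1 v -> c2 u = c2 v -> c3 u = c3 v -> c4 u = c4 v -> c5 u = c5 v -> u = v.
Proof. destruct u, v; simpl; intros; subst; reflexivity. Qed.

Lemma L_vsub_l u v w : L (vsub u v) w = L u w - L v w. Proof. destruct u, v, w; unfold L; simpl; ring. Qed.
Lemma L_vsub_r u v w : L w (vsub u v) = L w u - L w v. Proof. destruct u, v, w; unfold L; simpl; ring. Qed.
Lemma L_vadd_l u v w : L (vadd u v) w = L u w + L v w. Proof. destruct u, v, w; unfold L; simpl; ring. Qed.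
Lemma L_vadd_r u v w : L w (vadd u v) = L w u + L w v. Proof. destruct u, v, w; unfold L; simpl; ring. Qed.
Lemma L_vscal_l k u w : L (vscal k u) w = k * L u w. Proof. destruct u, w; unfold L; simpl; ring. Qed.
Lemma L_vscal_r k u w : L w (vscal k u) = k * L w u. Proof. destruct u, w; unfold L; simpl; ring. Qed.
Lemma L_vopp_l u w : L (vopp u) w = - L u w. Proof. destruct u, w; unfold L; simpl; ring. Qed.
Lemma L_vopp_r u w : L w (vopp u) = - L w u. Proof. destruct u, w; unfold L; simpl; ring. Qed.
Lemma L_zero_r u : L u vzero = 0. Proof. destruct u; unfold L; simpl; ring. Qed.

Lemma L_comb2 a b u v :
  L (vsub (vscal a u) (vscal b v)) (vsub (vscal a u) (vscal b v)) = a*a*L u u - 2*a*b*L u v + b*b*L v v.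
Proof. destruct u, v; unfold L; simpl; ring. Qed.

Lemma L_plane p q p' q' s1 s2 :
  L (vadd (vscal p s1) (vscal q s2)) (vadd (vscal p' s1) (vscal q' s2)) = Qf (L s1 s1) (L s1 s2) (L s2 s2) p q p' q'.
Proof. destruct s1, s2; unfold L, Qf; simpl; ring. Qed.

Lemma L_x3 m n s1 s2 s3 :
  L (vsub s3 (vadd (vscal m s1) (vscal n s2))) (vsub s3 (vadd (vscal m s1) (vscal n s2)))
  = L s3 s3 + m*m*L s1 s1 + n*n*L s2 s2 - 2*m*L s1 s3 - 2*n*L s2 s3 + 2*m*n*L s1 s2.
Proof. destruct s1, s2, s3; unfold L; simpl; ring. Qed.

Definition vsum4 u0 u1 u2 u3 := vadd (vadd u0 u1) (vadd u2 u3).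
Lemma L_sum4_r z u0 u1 u2 u3 : L z (vsum4 u0 u1 u2 u3) = L z u0 + L z u1 + L z u2 + L z u3.
Proof. unfold vsum4; rewrite !L_vadd_r; ring. Qed.
Lemma L_sum4 u0 u1 u2 u3 : L (vsum4 u0 u1 u2 u3) (vsum4 u0 u1 u2 u3) =
  L u0 u0 + L u1 u1 + L u2 u2 + L u3 u3 + 2*(L u0 u1 + L u0 u2 + L u0 u3 + L u1 u2 + L u1 u3 + L u2 u3).
Proof. destruct u0, u1, u2, u3; unfold vsum4, L; simpl; ring. Qed.

Lemma vzero_L x y : x = vzero -> L x y = 0.
Proof. intros ->; apply L_zero. Qed.

Lemma A2g (w a0 ai ak : V5) :
  L w w < 0 -> L ai w = L a0 w -> L ak w = L a0 w ->
  L a0 a0 = 1 -> L ai ai = 1 -> L ak ak = 1 ->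
  L a0 ai <= -1 -> L a0 ak <= -1 -> L ai ak <= -1 ->
  L (vsub ai a0) (vsub ai a0) * L (vsub ak a0) (vsub ak a0) - L (vsub ai a0) (vsub ak a0) * L (vsub ai a0) (vsub ak a0) > 0.
Proof.
intros Hw Hi Hk H0 H1 H2 H01 H02 H12.
assert (EA : L (vsub ai a0) (vsub ai a0) = 2 - 2 * L a0 ai)
  by (rewrite !L_vsub_l, !L_vsub_r, (L_sym ai a0); lra).
assert (EC : L (vsub ak a0) (vsub ak a0) = 2 - 2 * L a0 ak)
  by (rewrite !L_vsub_l, !L_vsub_r, (L_sym ak a0); lra).
assert (EB : L (vsub ai a0) (vsub ak a0) = L ai ak - L a0 ai - L a0 ak + 1)
  by (rewrite !L_vsub_l, !L_vsub_r, (L_sym ai a0); lra).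
set (si := vsub ai a0) in *. set (sk := vsub ak a0) in *.
set (A := L si si) in *. set (B := L si sk) in *. set (C := L sk sk) in *.
set (x := vsub (vscal A sk) (vscal B si)).
assert (Hxw : L x w = 0).
{ unfold x; rewrite L_vsub_l, !L_vscal_l; unfold si, sk; rewrite !L_vsub_l, Hi, Hk; ring. }
assert (Hxx : L x x = A * (A*C - B*B)).
{ unfold x; rewrite L_comb2. rewrite (L_sym sk si). fold A B C. ring. }
destruct (RCS_eq w x Hw Hxw) as [Hp Hz].
destruct (Rlt_or_le 0 (A*C - B*B)) as [h|h]; [lra|exfalso].
assert (HA : A >= 4) by lra.
assert (Hd : A*C - B*B = 0) by nra.
assert (Hx0 : x = vzero) by (apply Hz; rewrite Hxx, Hd; ring).
assert (Hxa : L x a0 = 0) by (apply vzero_L; exact Hx0).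
unfold x in Hxa; rewrite L_vsub_l, !L_vscal_l in Hxa.
unfold si, sk in Hxa; rewrite !L_vsub_l in Hxa.
rewrite (L_sym ak a0), (L_sym ai a0) in Hxa.
set (p := L a0 ai) in *. set (q := L a0 ak) in *. set (r := L ai ak) in *.
assert (HCB : C = B) by nra.
assert (HAC : A = C) by nra.
nra.
Qed.

Definition det3 a b c d e f := a*(d*f - e*e) - b*(b*f - c*e) + c*(b*e - c*d).

Lemma ker3 a b c d e f g0 g1 g2 :
  g0*a + g1*b + g2*c = 0 -> g0*b + g1*d + g2*e = 0 -> g0*c + g1*e + g2*f = 0 ->
  (g0 <> 0 \/ g1 <> 0 \/ g2 <> 0) -> det3 a b c d e f = 0.
Proof.
intros R0 R1 R2 Hnz.
assert (E0 : det3 a b c d e f * g0 = (d*f-e*e)*(g0*a+g1*b+g2*c) + (c*e-b*f)*(g0*b+g1*d+g2*e) + (b*e-c*d)*(g0*c+g1*e+g2*f)) by (unfold det3; ring).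
assert (E1 : det3 a b c d e f * g1 = (c*e-b*f)*(g0*a+g1*b+g2*c) + (a*f-c*c)*(g0*b+g1*d+g2*e) + (b*c-a*e)*(g0*c+g1*e+g2*f)) by (unfold det3; ring).
assert (E2 : det3 a b c d e f * g2 = (b*e-c*d)*(g0*a+g1*b+g2*c) + (b*c-a*e)*(g0*b+g1*d+g2*e) + (a*d-b*b)*(g0*c+g1*e+g2*f)) by (unfold det3; ring).
rewrite R0, R1, R2 in E0, E1, E2.
destruct Hnz as [h|[h|h]].
- apply (Rmult_eq_reg_r g0); [lra|exact h].
- apply (Rmult_eq_reg_r g1); [lra|exact h].
- apply (Rmult_eq_reg_r g2); [lra|exact h].
Qed.

Lemma A3g (dep : forall v0 v1 v2 v3 v4 v5 : V5, exists g0 g1 g2 g3 g4 g5 : R,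
   (g0 <> 0 \/ g1 <> 0 \/ g2 <> 0 \/ g3 <> 0 \/ g4 <> 0 \/ g5 <> 0) /\
   forall u, g0 * L v0 u + g1 * L v1 u + g2 * L v2 u + g3 * L v3 u + g4 * L v4 u + g5 * L v5 u = 0)
  (s1 s2 s3 t1 t2 wA wB : V5) :
  L wB wB < 0 -> L wA wA < 0 ->
  L s1 wB = 0 -> L s2 wB = 0 -> L s3 wB = 0 ->
  L s1 t1 = 0 -> L s1 t2 = 0 -> L s2 t1 = 0 -> L s2 t2 = 0 -> L s3 t1 = 0 -> L s3 t2 = 0 ->
  L wA t1 = 0 -> L wA t2 = 0 ->
  L t1 t1 * L t2 t2 - L t1 t2 * L t1 t2 > 0 ->
  det3 (L s1 s1) (L s1 s2) (L s1 s3) (L s2 s2) (L s2 s3) (L s3 s3) = 0.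
Proof.
intros HB HA H1 H2 H3 H11 H12 H21 H22 H31 H32 Hw1 Hw2 Hdt.
destruct (dep s1 s2 s3 t1 t2 wA) as (g0&g1&g2&g3&g4&g5&Hnz&Hrel).
pose proof (Hrel t1) as R1. pose proof (Hrel t2) as R2.
rewrite H11, H21, H31, Hw1 in R1. rewrite H12, H22, H32, Hw2 in R2.
rewrite (L_sym t2 t1) in R1.
set (T11 := L t1 t1) in *. set (T12 := L t1 t2) in *. set (T22 := L t2 t2) in *.
assert (R1' : g3*T11 + g4*T12 = 0) by lra.
assert (R2' : g3*T12 + g4*T22 = 0) by lra.
assert (E3 : g3 * (T11*T22 - T12*T12) = 0).
{ replace (g3 * (T11*T22 - T12*T12)) with (T22*(g3*T11 + g4*T12) - T12*(g3*T12 + g4*T22)) by ring.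
  rewrite R1', R2'; ring. }
assert (E4 : g4 * (T11*T22 - T12*T12) = 0).
{ replace (g4 * (T11*T22 - T12*T12)) with (T11*(g3*T12 + g4*T22) - T12*(g3*T11 + g4*T12)) by ring.
  rewrite R1', R2'; ring. }
assert (G3 : g3 = 0) by (apply (Rmult_eq_reg_r (T11*T22 - T12*T12)); lra).
assert (G4 : g4 = 0) by (apply (Rmult_eq_reg_r (T11*T22 - T12*T12)); lra).
subst g3 g4.
set (y := vadd (vadd (vscal g0 s1) (vscal g1 s2)) (vscal g2 s3)).
assert (Hy : forall u, L y u = - g5 * L wA u).
{ intro u. unfold y; rewrite !L_vadd_l, !L_vscal_l. pose proof (Hrel u). lra. }
assert (HyB : L y wB = 0) by (unfold y; rewrite !L_vadd_l, !L_vscal_l; rewrite H1, H2, H3; ring).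
destruct (RCS_eq wB y HB HyB) as [Hyy _].
assert (Eyy : L y y = g5 * g5 * L wA wA).
{ rewrite Hy, L_sym, Hy. ring. }
assert (G5 : g5 = 0).
{ destruct (Req_dec g5 0) as [e|ne]; [exact e|exfalso].
  pose proof (sq_pos g5 ne). assert (0 <= g5 * g5 * L wA wA) by lra.
  assert (g5 * g5 * L wA wA < 0) by (apply Rmult_lt_reg_l with (/ (g5*g5)); [apply Rinv_0_lt_compat; lra|]; field_simplify; lra). lra. }
subst g5.
pose proof (Hy s1) as Y1. pose proof (Hy s2) as Y2. pose proof (Hy s3) as Y3.
unfold y in Y1, Y2, Y3. rewrite !L_vadd_l, !L_vscal_l in Y1, Y2, Y3.
rewrite (L_sym s2 s1), (L_sym s3 s1), (L_sym s3 s2) in *.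
apply (ker3 _ _ _ _ _ _ g0 g1 g2); try lra.
all: destruct Hnz as [h|[h|[h|[h|[h|h]]]]]; try tauto; lra.
Qed.

Lemma A4g (s1 s2 s3 wB : V5) :
  L wB wB < 0 -> L s1 wB = 0 -> L s2 wB = 0 -> L s3 wB = 0 ->
  L s1 s1 * L s2 s2 - L s1 s2 * L s1 s2 > 0 ->
  det3 (L s1 s1) (L s1 s2) (L s1 s3) (L s2 s2) (L s2 s3) (L s3 s3) = 0 ->
  exists m n, s3 = vadd (vscal m s1) (vscal n s2).
Proof.
intros HB H1 H2 H3 HD Hdet.
set (A := L s1 s1) in *. set (B := L s1 s2) in *. set (C := L s2 s2) in *.
set (d13 := L s1 s3) in *. set (d23 := L s2 s3) in *. set (d33 := L s3 s3) in *.
set (D := A*C - B*B) in *.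
set (m := (C*d13 - B*d23)/D). set (n := (A*d23 - B*d13)/D).
exists m, n.
set (x := vsub s3 (vadd (vscal m s1) (vscal n s2))).
assert (Hxw : L x wB = 0) by (unfold x; rewrite L_vsub_l, L_vadd_l, !L_vscal_l; rewrite H1, H2, H3; ring).
assert (Hxx : L x x = 0).
{ unfold x; rewrite L_x3. fold A B C d13 d23 d33.
  unfold det3 in Hdet.
  transitivity ((A*(C*d33 - d23*d23) - B*(B*d33 - d13*d23) + d13*(B*d23 - d13*C))/D).
  - unfold m, n, D in *. field. lra.
  - rewrite Hdet. unfold Rdiv; ring. }
destruct (RCS_eq wB x HB Hxw) as [_ Hz].
specialize (Hz Hxx).
unfold x in Hz. clearbody m n.
destruct s1, s2, s3; unfold vsub, vadd, vscal, vzero in *; simpl in *.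
injection Hz; intros; apply V5_eq; simpl; lra.
Qed.

Lemma Qf_sym A B C p q p' q' : Qf A B C p q p' q' = Qf A B C p' q' p q.
Proof. unfold Qf; ring. Qed.

Lemma square A B C p0 q0 p1 q1 p2 q2 p3 q3 : 0 < A -> 0 < A*C - B*B ->
  let Q := Qf A B C in
  Q p0 q0 p0 q0 = 2 -> Q p1 q1 p1 q1 = 2 -> Q p2 q2 p2 q2 = 2 -> Q p3 q3 p3 q3 = 2 ->
  Q p0 q0 p1 q1 <= 0 -> Q p0 q0 p2 q2 <= 0 -> Q p0 q0 p3 q3 <= 0 ->
  Q p1 q1 p2 q2 <= 0 -> Q p1 q1 p3 q3 <= 0 -> Q p2 q2 p3 q3 <= 0 ->
  (Q p0 q0 p1 q1 = -2 /\ Q p2 q2 p3 q3 = -2 /\ Q p0 q0 p2 q2 = 0 /\ Q p0 q0 p3 q3 = 0 /\ Q p1 q1 p2 q2 = 0 /\ Q p1 q1 p3 q3 = 0)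
  \/ (Q p0 q0 p2 q2 = -2 /\ Q p1 q1 p3 q3 = -2 /\ Q p0 q0 p1 q1 = 0 /\ Q p0 q0 p3 q3 = 0 /\ Q p1 q1 p2 q2 = 0 /\ Q p2 q2 p3 q3 = 0)
  \/ (Q p0 q0 p3 q3 = -2 /\ Q p1 q1 p2 q2 = -2 /\ Q p0 q0 p1 q1 = 0 /\ Q p0 q0 p2 q2 = 0 /\ Q p1 q1 p3 q3 = 0 /\ Q p2 q2 p3 q3 = 0).
Proof.
intros HA HD Q H00 H11 H22 H33 H01 H02 H03 H12 H13 H23.
unfold Q in *; clear Q. set (Q := Qf A B C) in *.
assert (S : forall p q p' q', Q p q p' q' = Q p' q' p q) by (intros; apply Qf_sym).
assert (H10 : Q p1 q1 p0 q0 <= 0) by (rewrite S; exact H01).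
assert (H20 : Q p2 q2 p0 q0 <= 0) by (rewrite S; exact H02).
assert (H21 : Q p2 q2 p1 q1 <= 0) by (rewrite S; exact H12).
destruct (VL A B C HD p0 q0 p1 q1 p2 q2 p3 q3 H00 H11 H22 H33 H01 H02 H03 H12 H13 H23) as [E|[E|E]]; fold Q in E.
- destruct (OPP A B C HA HD p0 q0 p1 q1 H00 H11 E) as [e1 e2].
  assert (X2 : Q p1 q1 p2 q2 = - Q p0 q0 p2 q2) by (rewrite e1, e2; unfold Q, Qf; ring).
  assert (X3 : Q p1 q1 p3 q3 = - Q p0 q0 p3 q3) by (rewrite e1, e2; unfold Q, Qf; ring).
  assert (Z1 : Q p0 q0 p2 q2 = 0) by lra. assert (Z2 : Q p0 q0 p3 q3 = 0) by lra.
  destruct (VL A B C HD p2 q2 p0 q0 p1 q1 p3 q3 H22 H00 H11 H33 H20 H21 H23 H01 H03 H13) as [F|[F|F]]; fold Q in F;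
    first [lra | rewrite S in F; lra | left; repeat split; lra].
- destruct (OPP A B C HA HD p0 q0 p2 q2 H00 H22 E) as [e1 e2].
  assert (X2 : Q p1 q1 p2 q2 = - Q p0 q0 p1 q1) by (rewrite e1, e2; unfold Q, Qf; ring).
  assert (X3 : Q p2 q2 p3 q3 = - Q p0 q0 p3 q3) by (rewrite e1, e2; unfold Q, Qf; ring).
  assert (Z1 : Q p0 q0 p1 q1 = 0) by lra. assert (Z2 : Q p0 q0 p3 q3 = 0) by lra.
  destruct (VL A B C HD p1 q1 p0 q0 p2 q2 p3 q3 H11 H00 H22 H33 H10 H12 H13 H02 H03 H23) as [F|[F|F]]; fold Q in F;
    first [lra | rewrite S in F; lra | right; left; repeat split; lra].
- destruct (OPP A B C HA HD p0 q0 p3 q3 H00 H33 E) as [e1 e2].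
  assert (X2 : Q p1 q1 p3 q3 = - Q p0 q0 p1 q1) by (rewrite e1, e2; unfold Q, Qf; ring).
  assert (X3 : Q p2 q2 p3 q3 = - Q p0 q0 p2 q2) by (rewrite e1, e2; unfold Q, Qf; ring).
  assert (Z1 : Q p0 q0 p1 q1 = 0) by lra. assert (Z2 : Q p0 q0 p2 q2 = 0) by lra.
  destruct (VL A B C HD p1 q1 p0 q0 p2 q2 p3 q3 H11 H00 H22 H33 H10 H12 H13 H02 H03 H23) as [F|[F|F]]; fold Q in F;
    first [lra | rewrite S in F; lra | right; right; repeat split; lra].
Qed.

Definition pattern (M : nat -> nat -> R) : Prop :=
  (M 0%nat 1%nat < -1 /\ M 2%nat 3%nat < -1 /\ M 0%nat 2%nat = -1 /\ M 0%nat 3%nat = -1 /\ M 1%nat 2%nat = -1 /\ M 1%nat 3%nat = -1)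
  \/ (M 0%nat 2%nat < -1 /\ M 1%nat 3%nat < -1 /\ M 0%nat 1%nat = -1 /\ M 0%nat 3%nat = -1 /\ M 1%nat 2%nat = -1 /\ M 2%nat 3%nat = -1)
  \/ (M 0%nat 3%nat < -1 /\ M 1%nat 2%nat < -1 /\ M 0%nat 1%nat = -1 /\ M 0%nat 2%nat = -1 /\ M 1%nat 3%nat = -1 /\ M 2%nat 3%nat = -1).

Definition DEP := forall v0 v1 v2 v3 v4 v5 : V5, exists g0 g1 g2 g3 g4 g5 : R,
   (g0 <> 0 \/ g1 <> 0 \/ g2 <> 0 \/ g3 <> 0 \/ g4 <> 0 \/ g5 <> 0) /\
   forall u, g0 * L v0 u + g1 * L v1 u + g2 * L v2 u + g3 * L v3 u + g4 * L v4 u + g5 * L v5 u = 0.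

Lemma coord0 a0 s1 s2 x y : vsub a0 (vadd a0 (vadd (vscal x s1) (vscal y s2))) = vadd (vscal (-x) s1) (vscal (-y) s2).
Proof. destruct a0, s1, s2; apply V5_eq; simpl; ring. Qed.
Lemma coord1 a0 a1 s2 x y : vsub a1 (vadd a0 (vadd (vscal x (vsub a1 a0)) (vscal y s2))) = vadd (vscal (1-x) (vsub a1 a0)) (vscal (-y) s2).
Proof. destruct a0, a1, s2; apply V5_eq; simpl; ring. Qed.
Lemma coord2 a0 a2 s1 x y : vsub a2 (vadd a0 (vadd (vscal x s1) (vscal y (vsub a2 a0)))) = vadd (vscal (-x) s1) (vscal (1-y) (vsub a2 a0)).
Proof. destruct a0, a2, s1; apply V5_eq; simpl; ring. Qed.
Lemma coord3 a0 a3 s1 s2 x y m n : vsub a3 a0 = vadd (vscal m s1) (vscal n s2) ->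
  vsub a3 (vadd a0 (vadd (vscal x s1) (vscal y s2))) = vadd (vscal (m-x) s1) (vscal (n-y) s2).
Proof.
intro H. destruct a0, a3, s1, s2. unfold vsub, vadd, vscal in *; simpl in *.
injection H; intros. apply V5_eq; simpl; lra.
Qed.
Lemma vadd_sub a0 a1 : vadd a0 (vsub a1 a0) = a1.
Proof. destruct a0, a1; apply V5_eq; simpl; ring. Qed.

Lemma RCS f g : L f f < 0 -> L f f * L g g <= L f g * L f g.
Proof.
intro Hf.
set (x := vsub (vscal (L f f) g) (vscal (L f g) f)).
assert (Hx : L x f = 0) by (unfold x; rewrite L_vsub_l, !L_vscal_l, (L_sym g f); ring).
destruct (RCS_eq f x Hf Hx) as [H _].
unfold x in H; rewrite L_comb2, (L_sym g f) in H.
assert (0 <= L f f * (L f f * L g g - L f g * L f g)) by nra.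
nra.
Qed.

Section Center.
Variable dep : DEP.
Variables a b : nat -> V5.
Hypothesis Hna : forall i, (i < 4)%nat -> L (a i) (a i) = 1.
Hypothesis Hnb : forall i, (i < 4)%nat -> L (b i) (b i) = 1.
Hypothesis Hc : forall i j, (i < 4)%nat -> (j < 4)%nat -> L (a i) (b j) = -1.
Hypothesis Ha : forall i k, (i < 4)%nat -> (k < 4)%nat -> i <> k -> L (a i) (a k) <= -1.
Hypothesis Hb : forall i k, (i < 4)%nat -> (k < 4)%nat -> i <> k -> L (b i) (b k) <= -1.

Lemma center : exists f kap, L f f = kap /\
  (forall v, (forall i, (i < 4)%nat -> L v (a i) = -1) -> L f v = -1) /\ kap <= -1 /\
  (kap = -1 -> pattern (fun i k => L (a i) (a k))).
Proof.
assert (na0 := Hna 0 ltac:(lia)). assert (na1 := Hna 1 ltac:(lia)).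
assert (na2 := Hna 2 ltac:(lia)). assert (na3 := Hna 3 ltac:(lia)).
assert (nb0 := Hnb 0 ltac:(lia)). assert (nb1 := Hnb 1 ltac:(lia)).
assert (nb2 := Hnb 2 ltac:(lia)). assert (nb3 := Hnb 3 ltac:(lia)).
assert (a01 := Ha 0 1 ltac:(lia) ltac:(lia) ltac:(lia)). assert (a02 := Ha 0 2 ltac:(lia) ltac:(lia) ltac:(lia)).
assert (a03 := Ha 0 3 ltac:(lia) ltac:(lia) ltac:(lia)). assert (a12 := Ha 1 2 ltac:(lia) ltac:(lia) ltac:(lia)).
assert (a13 := Ha 1 3 ltac:(lia) ltac:(lia) ltac:(lia)). assert (a23 := Ha 2 3 ltac:(lia) ltac:(lia) ltac:(lia)).
assert (b01 := Hb 0 1 ltac:(lia) ltac:(lia) ltac:(lia)). assert (b02 := Hb 0 2 ltac:(lia) ltac:(lia) ltac:(lia)).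
assert (b03 := Hb 0 3 ltac:(lia) ltac:(lia) ltac:(lia)). assert (b12 := Hb 1 2 ltac:(lia) ltac:(lia) ltac:(lia)).
assert (b13 := Hb 1 3 ltac:(lia) ltac:(lia) ltac:(lia)). assert (b23 := Hb 2 3 ltac:(lia) ltac:(lia) ltac:(lia)).
set (wB := vsum4 (b 0) (b 1) (b 2) (b 3)).
set (wA := vsum4 (a 0) (a 1) (a 2) (a 3)).
assert (HwB : L wB wB < 0) by (unfold wB; rewrite L_sum4; lra).
assert (HwA : L wA wA < 0) by (unfold wA; rewrite L_sum4; lra).
assert (HaB : forall i, (i < 4)%nat -> L (a i) wB = -4).
{ intros i hi; unfold wB; rewrite L_sum4_r, !Hc by lia; ring. }
assert (HbA : forall j, (j < 4)%nat -> L (b j) wA = -4).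
{ intros j hj; unfold wA; rewrite L_sum4_r, !(L_sym (b j)), !Hc by lia; ring. }
set (s1 := vsub (a 1) (a 0)). set (s2 := vsub (a 2) (a 0)). set (s3 := vsub (a 3) (a 0)).
set (t1 := vsub (b 1) (b 0)). set (t2 := vsub (b 2) (b 0)).
assert (Hs : forall k, (k < 4)%nat -> L (vsub (a k) (a 0)) wB = 0).
{ intros k hk; rewrite L_vsub_l, !HaB by lia; ring. }
assert (Ht : forall k, (k < 4)%nat -> L wA (vsub (b k) (b 0)) = 0).
{ intros k hk; rewrite L_sym, L_vsub_l, !HbA by lia; ring. }
assert (Hst : forall k j, (k < 4)%nat -> (j < 4)%nat -> L (vsub (a k) (a 0)) (vsub (b j) (b 0)) = 0).
{ intros k j hk hj; rewrite L_vsub_l, !L_vsub_r, !Hc by lia; ring. }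
assert (D2a := A2g wB (a 0) (a 1) (a 2) HwB ltac:(rewrite !HaB by lia; ring) ltac:(rewrite !HaB by lia; ring)
  na0 na1 na2 a01 a02 a12).
assert (D2b := A2g wA (b 0) (b 1) (b 2) HwA ltac:(rewrite !HbA by lia; ring) ltac:(rewrite !HbA by lia; ring)
  nb0 nb1 nb2 b01 b02 b12).
fold s1 s2 in D2a. fold t1 t2 in D2b.
assert (D3 := A3g dep s1 s2 s3 t1 t2 wA wB HwB HwA (Hs 1%nat ltac:(lia)) (Hs 2%nat ltac:(lia)) (Hs 3%nat ltac:(lia))
  (Hst 1%nat 1%nat ltac:(lia) ltac:(lia)) (Hst 1%nat 2%nat ltac:(lia) ltac:(lia)) (Hst 2%nat 1%nat ltac:(lia) ltac:(lia))
  (Hst 2%nat 2%nat ltac:(lia) ltac:(lia)) (Hst 3%nat 1%nat ltac:(lia) ltac:(lia)) (Hst 3%nat 2%nat ltac:(lia) ltac:(lia))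
  (Ht 1%nat ltac:(lia)) (Ht 2%nat ltac:(lia)) D2b).
destruct (A4g s1 s2 s3 wB HwB (Hs 1%nat ltac:(lia)) (Hs 2%nat ltac:(lia)) (Hs 3%nat ltac:(lia)) D2a D3) as (m & n & Hs3).
set (A := L s1 s1) in *. set (B := L s1 s2) in *. set (C := L s2 s2) in *.
set (D := A*C - B*B) in *. assert (HD2 : D > 0) by exact D2a.
set (e1 := L (a 0) s1). set (e2 := L (a 0) s2).
set (al := (B*e2 - C*e1)/D). set (be := (B*e1 - A*e2)/D).
set (f := vadd (a 0) (vadd (vscal al s1) (vscal be s2))).
assert (Hf1 : L f s1 = 0).
{ unfold f; rewrite !L_vadd_l, !L_vscal_l, (L_sym s2 s1). fold e1 A B. unfold al, be, D. field. unfold D in HD2; lra. }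
assert (Hf2 : L f s2 = 0).
{ unfold f; rewrite !L_vadd_l, !L_vscal_l. fold e2 B C. unfold al, be, D. field. unfold D in HD2; lra. }
assert (Hf3 : L f s3 = 0).
{ rewrite Hs3, L_vadd_r, !L_vscal_r, Hf1, Hf2; ring. }
set (kap := L f (a 0)).
assert (Hfa : forall i, (i < 4)%nat -> L f (a i) = kap).
{ intros i hi. destruct i as [|[|[|[|i]]]]; try lia.
  - reflexivity.
  - rewrite <- (vadd_sub (a 0) (a 1)), L_vadd_r. fold s1. rewrite Hf1; unfold kap; ring.
  - rewrite <- (vadd_sub (a 0) (a 2)), L_vadd_r. fold s2. rewrite Hf2; unfold kap; ring.
  - rewrite <- (vadd_sub (a 0) (a 3)), L_vadd_r. fold s3. rewrite Hf3; unfold kap; ring. }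
assert (Hff : L f f = kap).
{ transitivity (L f (a 0) + al * L f s1 + be * L f s2).
  - unfold f at 2. rewrite !L_vadd_r, !L_vscal_r. ring.
  - rewrite Hf1, Hf2. unfold kap; ring. }
exists f, kap. split; [exact Hff|].
split.
{ intros v Hv. unfold f. rewrite !L_vadd_l, !L_vscal_l. unfold s1, s2. rewrite !L_vsub_l.
  rewrite !(L_sym _ v), !Hv by lia. ring. }
assert (Hsig : forall i k, (i < 4)%nat -> (k < 4)%nat -> L (vsub (a i) f) (vsub (a k) f) = L (a i) (a k) - kap).
{ intros i k hi hk. rewrite !L_vsub_l, !L_vsub_r, (L_sym (a i) f), Hfa, Hfa, Hff by lia. ring. }
assert (E0 : vsub (a 0) f = vadd (vscal (-al) s1) (vscal (-be) s2)) by (unfold f; apply coord0).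
assert (E1 : vsub (a 1) f = vadd (vscal (1-al) s1) (vscal (-be) s2)) by (unfold f, s1; apply coord1).
assert (E2 : vsub (a 2) f = vadd (vscal (-al) s1) (vscal (1-be) s2)) by (unfold f, s2; apply coord2).
assert (E3 : vsub (a 3) f = vadd (vscal (m-al) s1) (vscal (n-be) s2)) by (unfold f; apply coord3; exact Hs3).
assert (Q : forall i k p q p' q', (i < 4)%nat -> (k < 4)%nat ->
   vsub (a i) f = vadd (vscal p s1) (vscal q s2) -> vsub (a k) f = vadd (vscal p' s1) (vscal q' s2) ->
   Qf A B C p q p' q' = L (a i) (a k) - kap).
{ intros i k p q p' q' hi hk Ei Ek. rewrite <- (Hsig i k hi hk), Ei, Ek, L_plane. reflexivity. }
assert (Q00 := Q 0%nat 0%nat _ _ _ _ ltac:(lia) ltac:(lia) E0 E0).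
assert (Q11 := Q 1%nat 1%nat _ _ _ _ ltac:(lia) ltac:(lia) E1 E1).
assert (Q22 := Q 2%nat 2%nat _ _ _ _ ltac:(lia) ltac:(lia) E2 E2).
assert (Q33 := Q 3%nat 3%nat _ _ _ _ ltac:(lia) ltac:(lia) E3 E3).
assert (Q01 := Q 0%nat 1%nat _ _ _ _ ltac:(lia) ltac:(lia) E0 E1).
assert (Q02 := Q 0%nat 2%nat _ _ _ _ ltac:(lia) ltac:(lia) E0 E2).
assert (Q03 := Q 0%nat 3%nat _ _ _ _ ltac:(lia) ltac:(lia) E0 E3).
assert (Q12 := Q 1%nat 2%nat _ _ _ _ ltac:(lia) ltac:(lia) E1 E2).
assert (Q13 := Q 1%nat 3%nat _ _ _ _ ltac:(lia) ltac:(lia) E1 E3).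
assert (Q23 := Q 2%nat 3%nat _ _ _ _ ltac:(lia) ltac:(lia) E2 E3).
assert (HA : 0 < A) by (unfold A, s1; rewrite !L_vsub_l, !L_vsub_r, (L_sym (a 1) (a 0)); lra).
assert (HD : 0 < D) by lra.
assert (Hk : kap <= -1).
{ assert (2 <= 1 - kap); [|lra].
  apply (PL1 A B C HA HD (1 - kap) (-al) (-be) (1-al) (-be) (-al) (1-be) (m-al) (n-be)); lra. }
split; [exact Hk|].
intro Hk1.
destruct (square A B C (-al) (-be) (1-al) (-be) (-al) (1-be) (m-al) (n-be) HA HD) as [P|[P|P]];
  try lra.
- left. lra.
- right; left. lra.
- right; right. lra.
Qed.

End Center.

Theorem side (dep : DEP) (a b : nat -> V5) :
  (forall i, (i < 4)%nat -> L (a i) (a i) = 1) ->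
  (forall i, (i < 4)%nat -> L (b i) (b i) = 1) ->
  (forall i j, (i < 4)%nat -> (j < 4)%nat -> L (a i) (b j) = -1) ->
  (forall i k, (i < 4)%nat -> (k < 4)%nat -> i <> k -> L (a i) (a k) <= -1) ->
  (forall i k, (i < 4)%nat -> (k < 4)%nat -> i <> k -> L (b i) (b k) <= -1) ->
  pattern (fun i k => L (a i) (a k)).
Proof.
intros Hna Hnb Hc Ha Hb.
destruct (center dep a b Hna Hnb Hc Ha Hb) as (f & k & Hff & Hfv & Hk & Hpat).
assert (Hc' : forall i j, (i < 4)%nat -> (j < 4)%nat -> L (b i) (a j) = -1)
  by (intros; rewrite L_sym; apply Hc; assumption).
destruct (center dep b a Hnb Hna Hc' Hb Ha) as (g & k' & Hgg & Hgv & Hk' & _).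
assert (Hga : forall i, (i < 4)%nat -> L g (a i) = -1).
{ intros i hi. apply Hgv. intros j hj. apply Hc; assumption. }
assert (Hfg : L f g = -1) by (apply Hfv; exact Hga).
pose proof (RCS f g ltac:(lra)) as HR.
rewrite Hff, Hgg, Hfg in HR.
apply Hpat. nra.
Qed.
Open Scope R_scope.

Lemma sq_nonneg' x : 0 <= x * x. Proof. nra. Qed.

Definition add3 (x y : R3) : R3 :=
  let '(x1, x2, x3) := x in let '(y1, y2, y3) := y in (x1 + y1, x2 + y2, x3 + y3).
Definition scal3 (k : R) (x : R3) : R3 :=
  let '(x1, x2, x3) := x in (k * x1, k * x2, k * x3).
Definition nrm (u : R3) := sqrt (dot u u).

Lemma dot_nonneg u : 0 <= dot u u.
Proof. destruct u as [[u1 u2] u3]; simpl. pose proof (sq_nonneg' u1); pose proof (sq_nonneg' u2); pose proof (sq_nonneg' u3); lra. Qed.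

Lemma dist2_nonneg x y : 0 <= dist2 x y.
Proof. apply dot_nonneg. Qed.

Lemma dist2_sym x y : dist2 x y = dist2 y x.
Proof. destruct x as [[x1 x2] x3]; destruct y as [[y1 y2] y3]; unfold dist2; simpl; ring. Qed.

Lemma dot_zero u : dot u u = 0 -> u = zero3.
Proof.
destruct u as [[u1 u2] u3]; simpl; intro H.
pose proof (sq_nonneg' u1); pose proof (sq_nonneg' u2); pose proof (sq_nonneg' u3).
assert (u1 = 0) by nra. assert (u2 = 0) by nra. assert (u3 = 0) by nra. subst; reflexivity.
Qed.

Lemma dist2_zero x y : dist2 x y = 0 -> x = y.
Proof.
destruct x as [[x1 x2] x3]; destruct y as [[y1 y2] y3]; unfold dist2; simpl; intro H.
pose proof (sq_nonneg' (x1-y1)); pose proof (sq_nonneg' (x2-y2)); pose proof (sq_nonneg' (x3-y3)).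
assert (x1 - y1 = 0) by nra. assert (x2 - y2 = 0) by nra. assert (x3 - y3 = 0) by nra.
f_equal; [f_equal|]; lra.
Qed.

Lemma sqrt_facts x : 0 <= x -> 0 <= sqrt x /\ sqrt x * sqrt x = x.
Proof. intro h; split; [apply sqrt_pos | apply sqrt_sqrt; exact h]. Qed.

Lemma CS u v : dot u v <= nrm u * nrm v.
Proof.
unfold nrm.
destruct (sqrt_facts (dot u u) (dot_nonneg u)) as [h1 h2].
destruct (sqrt_facts (dot v v) (dot_nonneg v)) as [h3 h4].
assert (HL : dot u v * dot u v <= dot u u * dot v v).
{ destruct u as [[u1 u2] u3]; destruct v as [[v1 v2] v3]; simpl.
  pose proof (sq_nonneg' (u1*v2-u2*v1)); pose proof (sq_nonneg' (u1*v3-u3*v1)); pose proof (sq_nonneg' (u2*v3-u3*v2)).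
  nra. }
set (a := sqrt (dot u u)) in *. set (b := sqrt (dot v v)) in *.
assert (0 <= a * b) by nra.
destruct (Rle_lt_dec (dot u v) 0); [lra|].
assert (dot u v * dot u v <= (a*b)*(a*b)) by nra.
nra.
Qed.

Lemma tri_vec u v : nrm (add3 u v) <= nrm u + nrm v.
Proof.
pose proof (CS u v) as Hc. unfold nrm in *.
destruct (sqrt_facts (dot u u) (dot_nonneg u)) as [h1 h2].
destruct (sqrt_facts (dot v v) (dot_nonneg v)) as [h3 h4].
destruct (sqrt_facts _ (dot_nonneg (add3 u v))) as [h5 h6].
assert (E : dot (add3 u v) (add3 u v) = dot u u + 2 * dot u v + dot v v)
  by (destruct u as [[u1 u2] u3]; destruct v as [[v1 v2] v3]; simpl; ring).
set (a := sqrt (dot u u)) in *. set (b := sqrt (dot v v)) in *. set (c := sqrt (dot (add3 u v) (add3 u v))) in *.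
nra.
Qed.

Definition dst x y := sqrt (dist2 x y).

Lemma dst_facts x y : 0 <= dst x y /\ dst x y * dst x y = dist2 x y.
Proof. apply sqrt_facts, dist2_nonneg. Qed.

Lemma dst_sym x y : dst x y = dst y x.
Proof. unfold dst; rewrite dist2_sym; reflexivity. Qed.

Lemma tri x y z : dst x z <= dst x y + dst y z.
Proof.
unfold dst, dist2.
replace (sub3 x z) with (add3 (sub3 x y) (sub3 y z)).
- apply tri_vec.
- destruct x as [[x1 x2] x3]; destruct y as [[y1 y2] y3]; destruct z as [[z1 z2] z3]; simpl; f_equal; [f_equal|]; ring.
Qed.

Lemma lt_of_sq s e : 0 <= s -> 0 <= e -> s * s < e * e -> s < e.
Proof. intros; nra. Qed.
Lemma le_of_sq s e : 0 <= s -> 0 <= e -> s * s <= e * e -> s <= e.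
Proof. intros; nra. Qed.

Lemma int_ball c r x : 0 < r -> dist2 x c < r * r -> Defs.interior (closed_ball c r) (Some x).
Proof.
intros hr h.
destruct (dst_facts x c) as [d0 d1].
assert (hd : dst x c < r) by (apply lt_of_sq; lra).
exists (r - dst x c). split; [lra|].
intros [y|] hy; simpl in *; [|contradiction].
destruct (dst_facts y x) as [e0 e1].
assert (dst y x < r - dst x c) by (apply lt_of_sq; lra).
pose proof (tri y x c).
destruct (dst_facts y c) as [f0 f1].
assert (dst y c < r) by lra.
nra.
Qed.

Lemma int_ext c r x : 0 < r -> r * r < dist2 x c -> Defs.interior (closed_exterior c r) (Some x).
Proof.
intros hr h.
destruct (dst_facts x c) as [d0 d1].
assert (hd : r < dst x c) by (apply lt_of_sq; lra).
exists (dst x c - r). split; [lra|].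
intros [y|] hy; simpl in *; [|contradiction].
destruct (dst_facts y x) as [e0 e1].
assert (dst y x < dst x c - r) by (apply lt_of_sq; lra).
pose proof (tri x y c). rewrite (dst_sym x y) in H0.
destruct (dst_facts y c) as [f0 f1].
assert (r < dst y c) by lra.
nra.
Qed.

Lemma nrm_pos n : n <> zero3 -> 0 < nrm n.
Proof.
intro h. unfold nrm. apply sqrt_lt_R0.
destruct (Rle_lt_or_eq_dec 0 (dot n n) (dot_nonneg n)) as [h1|h1]; [exact h1|].
exfalso; apply h, dot_zero; auto.
Qed.

Lemma nrm_sq n : nrm n * nrm n = dot n n.
Proof. apply sqrt_sqrt, dot_nonneg. Qed.

Lemma int_half n b x : n <> zero3 -> b < dot n x -> Defs.interior (closed_halfspace n b) (Some x).
Proof.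
intros hn h.
pose proof (nrm_pos n hn) as hm.
set (m := nrm n) in *.
exists ((dot n x - b) / (m + 1)). split.
{ apply Rdiv_lt_0_compat; lra. }
intros [y|] hy; simpl in *; [|contradiction].
destruct (dst_facts y x) as [e0 e1].
assert (hyx : dst y x < (dot n x - b) / (m + 1)).
{ apply lt_of_sq; [lra| left; apply Rdiv_lt_0_compat; lra| lra]. }
pose proof (CS n (sub3 x y)) as hc.
assert (E : dot n (sub3 x y) = dot n x - dot n y)
  by (destruct n as [[n1 n2] n3]; destruct x as [[x1 x2] x3]; destruct y as [[y1 y2] y3]; simpl; ring).
assert (E2 : nrm (sub3 x y) = dst y x) by (unfold nrm, dst; rewrite dist2_sym; reflexivity).
rewrite E, E2 in hc. fold m in hc.
assert (m * dst y x <= m * ((dot n x - b) / (m + 1))) by (apply Rmult_le_compat_l; lra).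
assert (m * ((dot n x - b) / (m + 1)) < dot n x - b).
{ apply (Rmult_lt_reg_r (m+1)); [lra|]. field_simplify; [|lra]. nra. }
lra.
Qed.

Lemma int_ext_inf c r : 0 < r -> Defs.interior (closed_exterior c r) None.
Proof.
intros hr.
set (K := nrm c + r + 1).
assert (hK : 0 < K) by (unfold K, nrm; pose proof (sqrt_pos (dot c c)); lra).
exists (/ K). split; [apply Rinv_0_lt_compat; lra|].
intros [y|] hy; simpl in *; [|exact I].
replace (/ (/ K * / K)) with (K * K) in hy by (field; lra).
destruct (dst_facts y zero3) as [e0 e1].
assert (h1 : K < dst y zero3) by (apply lt_of_sq; [lra|lra|lra]).
pose proof (tri y c zero3).
assert (E : dst c zero3 = nrm c).
{ unfold dst, nrm, dist2. f_equal. destruct c as [[c1 c2] c3]; simpl; ring. }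
destruct (dst_facts y c) as [f0 f1].
assert (r < dst y c) by (unfold K in h1; lra).
nra.
Qed.
Open Scope R_scope.

Inductive shape := SBall (c : R3) (r : R) | SExt (c : R3) (r : R) | SHalf (n : R3) (b : R).
Definition valid s := match s with SBall _ r | SExt _ r => 0 < r | SHalf n _ => n <> zero3 end.
Definition den s : pt -> Prop :=
  match s with SBall c r => closed_ball c r | SExt c r => closed_exterior c r | SHalf n b => closed_halfspace n b end.
Definition vecB (c : R3) (r : R) : V5 :=
  let K := dot c c - r * r in
  let '(x, y, z) := c in mk5 (x / r) (y / r) (z / r) ((K - 1) / (2 * r)) ((K + 1) / (2 * r)).
Definition vecH (n : R3) (b : R) : V5 :=
  let m := nrm n in let '(x, y, z) := n in mk5 (x / m) (y / m) (z / m) (b / m) (b / m).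
Definition vec s := match s with SBall c r => vecB c r | SExt c r => vopp (vecB c r) | SHalf n b => vecH n b end.

Definition DI (A B : pt -> Prop) := forall p, ~ (Defs.interior A p /\ Defs.interior B p).

Lemma dot_sym u v : dot u v = dot v u.
Proof. destruct u as [[u1 u2] u3]; destruct v as [[v1 v2] v3]; simpl; ring. Qed.

Lemma sub3_self c : sub3 c c = zero3.
Proof. destruct c as [[x y] z]; unfold zero3; simpl; f_equal; [f_equal|]; ring. Qed.

Lemma LBB c1 r1 c2 r2 : 0 < r1 -> 0 < r2 ->
  L (vecB c1 r1) (vecB c2 r2) = (r1*r1 + r2*r2 - dist2 c1 c2) / (2*r1*r2).
Proof. intros; destruct c1 as [[x1 y1] z1]; destruct c2 as [[x2 y2] z2]; unfold L, dist2; simpl. field; lra. Qed.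

Lemma LBH c r n b : 0 < r -> n <> zero3 -> L (vecB c r) (vecH n b) = (dot c n - b) / (r * nrm n).
Proof.
intros hr hn. pose proof (nrm_pos n hn).
unfold vecH. set (m := nrm n) in *.
destruct c as [[x1 y1] z1]; destruct n as [[x2 y2] z2]; unfold L; simpl. field; lra.
Qed.

Lemma LHH n b n' b' : n <> zero3 -> n' <> zero3 -> L (vecH n b) (vecH n' b') = dot n n' / (nrm n * nrm n').
Proof.
intros hn hn'. pose proof (nrm_pos n hn). pose proof (nrm_pos n' hn').
unfold vecH. set (m := nrm n) in *. set (m' := nrm n') in *.
destruct n as [[x1 y1] z1]; destruct n' as [[x2 y2] z2]; unfold L; simpl. field; lra.
Qed.

Lemma vec_norm s : valid s -> L (vec s) (vec s) = 1.
Proof.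
destruct s as [c r|c r|n b]; simpl; intro h.
- rewrite LBB by lra. unfold dist2. rewrite sub3_self.
  simpl. field. lra.
- rewrite L_vopp_l, L_vopp_r, LBB by lra. unfold dist2. rewrite sub3_self.
  simpl. field. lra.
- rewrite LHH by assumption. rewrite <- nrm_sq. pose proof (nrm_pos n h). field. lra.
Qed.

Lemma GC_BB c1 r1 c2 r2 : 0 < r1 -> 0 < r2 -> DI (closed_ball c1 r1) (closed_ball c2 r2) ->
  (r1 + r2) * (r1 + r2) <= dist2 c1 c2.
Proof.
intros h1 h2 HD. apply Rnot_lt_le. intro hlt.
set (t := r1 / (r1 + r2)).
set (x := add3 c1 (scal3 t (sub3 c2 c1))).
assert (E1 : dist2 x c1 = t * t * dist2 c1 c2).
{ unfold x; destruct c1 as [[a1 a2] a3]; destruct c2 as [[b1 b2] b3]; unfold dist2; simpl; ring. }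
assert (E2 : dist2 x c2 = (1 - t) * (1 - t) * dist2 c1 c2).
{ unfold x; destruct c1 as [[a1 a2] a3]; destruct c2 as [[b1 b2] b3]; unfold dist2; simpl; ring. }
assert (T1 : t * (r1 + r2) = r1) by (unfold t; field; lra).
assert (T2 : (1 - t) * (r1 + r2) = r2) by (unfold t; field; lra).
assert (ht : 0 < t) by (unfold t; apply Rdiv_lt_0_compat; lra).
assert (ht' : 0 < 1 - t) by nra.
apply (HD (Some x)). split.
- apply int_ball; [lra|]. rewrite E1.
  assert (t * t * dist2 c1 c2 < t * t * ((r1+r2)*(r1+r2))) by (apply Rmult_lt_compat_l; nra).
  nra.
- apply int_ball; [lra|]. rewrite E2.
  assert ((1-t) * (1-t) * dist2 c1 c2 < (1-t) * (1-t) * ((r1+r2)*(r1+r2))) by (apply Rmult_lt_compat_l; nra).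
  nra.
Qed.

Lemma GC_BE c1 r1 c2 r2 : 0 < r1 -> 0 < r2 -> DI (closed_ball c1 r1) (closed_exterior c2 r2) ->
  dst c1 c2 + r1 <= r2.
Proof.
intros h1 h2 HD. apply Rnot_lt_le. intro hlt.
destruct (dst_facts c1 c2) as [d0 d1].
set (d := dst c1 c2) in *.
set (s := (Rmax 0 (r2 - d) + r1) / 2).
assert (hs1 : s < r1) by (unfold s; apply Rmax_case_strong; intros; lra).
assert (hs2 : r2 - d < s) by (unfold s; apply Rmax_case_strong; intros; lra).
assert (hs0 : 0 <= s) by (unfold s; apply Rmax_case_strong; intros; lra).
destruct (Rle_lt_or_eq_dec 0 d d0) as [dpos|dz].
- set (x := add3 c1 (scal3 (s / d) (sub3 c1 c2))).
  assert (E1 : dist2 x c1 = (s / d) * (s / d) * dist2 c1 c2).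
  { unfold x; destruct c1 as [[a1 a2] a3]; destruct c2 as [[b1 b2] b3]; unfold dist2; simpl; ring. }
  assert (E2 : dist2 x c2 = (1 + s / d) * (1 + s / d) * dist2 c1 c2).
  { unfold x; destruct c1 as [[a1 a2] a3]; destruct c2 as [[b1 b2] b3]; unfold dist2; simpl; ring. }
  rewrite <- d1 in E1, E2.
  replace ((s / d) * (s / d) * (d * d)) with (s * s) in E1 by (field; lra).
  replace ((1 + s / d) * (1 + s / d) * (d * d)) with ((d + s) * (d + s)) in E2 by (field; lra).
  apply (HD (Some x)). split.
  + apply int_ball; [lra|]. rewrite E1. nra.
  + apply int_ext; [lra|]. rewrite E2. nra.
- assert (Hc : c1 = c2) by (apply dist2_zero; rewrite <- d1, <- dz; ring).
  subst c2.
  set (x := add3 c1 (s, 0, 0)).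
  assert (E1 : dist2 x c1 = s * s).
  { unfold x; destruct c1 as [[a1 a2] a3]; unfold dist2; simpl; ring. }
  apply (HD (Some x)). split.
  + apply int_ball; [lra|]. rewrite E1. nra.
  + apply int_ext; [lra|]. rewrite E1. nra.
Qed.

Lemma GC_BH c r n b : 0 < r -> n <> zero3 -> DI (closed_ball c r) (closed_halfspace n b) ->
  dot c n + r * nrm n <= b.
Proof.
intros hr hn HD. apply Rnot_lt_le. intro hlt.
pose proof (nrm_pos n hn) as hm. pose proof (nrm_sq n) as hm2.
set (m := nrm n) in *.
set (s := (Rmax 0 ((b - dot c n) / m) + r) / 2).
assert (hq : (b - dot c n) / m < r).
{ apply (Rmult_lt_reg_r m); [lra|]. unfold Rdiv; rewrite Rmult_assoc, Rinv_l by lra. lra. }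
assert (hs1 : s < r) by (unfold s; apply Rmax_case_strong; intros; lra).
assert (hs2 : (b - dot c n) / m < s) by (unfold s; apply Rmax_case_strong; intros; lra).
assert (hs0 : 0 <= s) by (unfold s; apply Rmax_case_strong; intros; lra).
set (x := add3 c (scal3 (s / m) n)).
assert (E1 : dist2 x c = (s / m) * (s / m) * dot n n).
{ unfold x; destruct c as [[a1 a2] a3]; destruct n as [[b1 b2] b3]; unfold dist2; simpl; ring. }
assert (E2 : dot n x = dot c n + (s / m) * dot n n).
{ unfold x; destruct c as [[a1 a2] a3]; destruct n as [[b1 b2] b3]; simpl; ring. }
rewrite <- hm2 in E1, E2.
replace ((s / m) * (s / m) * (m * m)) with (s * s) in E1 by (field; lra).
replace ((s / m) * (m * m)) with (s * m) in E2 by (field; lra).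
assert (b < dot c n + s * m).
{ assert (((b - dot c n) / m) * m < s * m) by (apply Rmult_lt_compat_r; lra).
  replace ((b - dot c n) / m * m) with (b - dot c n) in H by (field; lra). lra. }
apply (HD (Some x)). split.
- apply int_ball; [lra|]. rewrite E1. nra.
- apply int_half; [exact hn|]. lra.
Qed.

Lemma GC_EE c1 r1 c2 r2 : 0 < r1 -> 0 < r2 -> DI (closed_exterior c1 r1) (closed_exterior c2 r2) -> False.
Proof. intros h1 h2 HD. apply (HD None). split; apply int_ext_inf; assumption. Qed.

Lemma GC_EH c r n b : 0 < r -> n <> zero3 -> DI (closed_exterior c r) (closed_halfspace n b) -> False.
Proof.
intros hr hn HD.
pose proof (nrm_pos n hn) as hm. pose proof (nrm_sq n) as hm2.
set (m := nrm n) in *.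
set (t := (r + Rabs (b - dot n c) / m + 1) / m).
set (x := add3 c (scal3 t n)).
assert (E1 : dist2 x c = t * t * dot n n).
{ unfold x; destruct c as [[a1 a2] a3]; destruct n as [[b1 b2] b3]; unfold dist2; simpl; ring. }
assert (E2 : dot n x = dot n c + t * dot n n).
{ unfold x; destruct c as [[a1 a2] a3]; destruct n as [[b1 b2] b3]; simpl; ring. }
rewrite <- hm2 in E1, E2.
assert (Ht : t * m = r + Rabs (b - dot n c) / m + 1) by (unfold t; field; lra).
assert (HA : 0 <= Rabs (b - dot n c) / m) by (apply Rmult_le_pos; [apply Rabs_pos| left; apply Rinv_0_lt_compat; lra]).
assert (HA2 : Rabs (b - dot n c) / m * m = Rabs (b - dot n c)) by (field; lra).
pose proof (Rle_abs (b - dot n c)).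
apply (HD (Some x)). split.
- apply int_ext; [lra|]. rewrite E1. replace (t * t * (m * m)) with ((t*m)*(t*m)) by ring. rewrite Ht. nra.
- apply int_half; [exact hn|]. rewrite E2. replace (t * (m * m)) with ((t * m) * m) by ring. rewrite Ht. nra.
Qed.

Lemma CS_neg u v : - (nrm u * nrm v) <= dot u v.
Proof.
pose proof (CS u (scal3 (-1) v)) as h.
assert (E : dot u (scal3 (-1) v) = - dot u v)
  by (destruct u as [[u1 u2] u3]; destruct v as [[v1 v2] v3]; simpl; ring).
assert (E2 : nrm (scal3 (-1) v) = nrm v)
  by (unfold nrm; f_equal; destruct v as [[v1 v2] v3]; simpl; ring).
rewrite E, E2 in h. lra.
Qed.

Lemma antipar n n' : n <> zero3 -> n' <> zero3 -> dot n n' = - (nrm n * nrm n') ->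
  n' = scal3 (- (nrm n' / nrm n)) n.
Proof.
intros hn hn' h.
pose proof (nrm_pos n hn). pose proof (nrm_pos n' hn').
pose proof (nrm_sq n). pose proof (nrm_sq n').
set (m := nrm n) in *. set (m' := nrm n') in *.
assert (Z : dot (add3 (scal3 m n') (scal3 m' n)) (add3 (scal3 m n') (scal3 m' n)) = 0).
{ transitivity (m*m*dot n' n' + 2*m*m'*dot n n' + m'*m'*dot n n).
  - destruct n as [[a1 a2] a3]; destruct n' as [[b1 b2] b3]; simpl; ring.
  - rewrite h, <- H1, <- H2. ring. }
apply dot_zero in Z.
destruct n as [[a1 a2] a3]; destruct n' as [[b1 b2] b3]; simpl in *.
injection Z; intros.
f_equal; [f_equal|]; field_simplify; try lra; apply (Rmult_eq_reg_l m); try lra; field_simplify; lra.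
Qed.

Lemma GC_HH n b n' b' : n <> zero3 -> n' <> zero3 -> DI (closed_halfspace n b) (closed_halfspace n' b') ->
  dot n n' = - (nrm n * nrm n') /\ 0 <= b / nrm n + b' / nrm n'.
Proof.
intros hn hn' HD.
pose proof (nrm_pos n hn) as hm. pose proof (nrm_pos n' hn') as hm'.
pose proof (nrm_sq n) as q. pose proof (nrm_sq n') as q'.
set (m := nrm n) in *. set (m' := nrm n') in *.
assert (Hanti : dot n n' = - (m * m')).
{ pose proof (CS_neg n n') as hc. fold m m' in hc.
  destruct (Rle_lt_or_eq_dec _ _ hc) as [hlt|heq]; [exfalso|lra].
  set (lam := m * m' + dot n n').
  assert (hl : 0 < lam) by (unfold lam; lra).
  set (RR := (Rabs b * m' + Rabs b' * m) / lam + 1).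
  set (x := scal3 RR (add3 (scal3 (/ m) n) (scal3 (/ m') n'))).
  assert (E1 : dot n x = RR * (dot n n / m + dot n n' / m')).
  { unfold x; destruct n as [[a1 a2] a3]; destruct n' as [[b1 b2] b3]; simpl; field; lra. }
  assert (E2 : dot n' x = RR * (dot n n' / m + dot n' n' / m')).
  { unfold x; destruct n as [[a1 a2] a3]; destruct n' as [[b1 b2] b3]; simpl; field; lra. }
  rewrite <- q in E1. rewrite <- q' in E2.
  replace (m * m / m + dot n n' / m') with (lam / m') in E1 by (unfold lam; field; lra).
  replace (dot n n' / m + m' * m' / m') with (lam / m) in E2 by (unfold lam; field; lra).
  assert (RE1 : RR * (lam / m') = (Rabs b * m' + Rabs b' * m) / m' + lam / m') by (unfold RR; field; lra).
  assert (RE2 : RR * (lam / m) = (Rabs b * m' + Rabs b' * m) / m + lam / m) by (unfold RR; field; lra).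
  assert (F1 : (Rabs b * m' + Rabs b' * m) / m' = Rabs b + Rabs b' * m / m') by (field; lra).
  assert (F2 : (Rabs b * m' + Rabs b' * m) / m = Rabs b * m' / m + Rabs b') by (field; lra).
  assert (P1 : 0 <= Rabs b' * m / m') by (apply Rmult_le_pos; [apply Rmult_le_pos; [apply Rabs_pos|lra]|left; apply Rinv_0_lt_compat; lra]).
  assert (P2 : 0 <= Rabs b * m' / m) by (apply Rmult_le_pos; [apply Rmult_le_pos; [apply Rabs_pos|lra]|left; apply Rinv_0_lt_compat; lra]).
  assert (P3 : 0 < lam / m') by (apply Rdiv_lt_0_compat; lra).
  assert (P4 : 0 < lam / m) by (apply Rdiv_lt_0_compat; lra).
  pose proof (Rle_abs b). pose proof (Rle_abs b').
  apply (HD (Some x)). split.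
  - apply int_half; [exact hn|]. lra.
  - apply int_half; [exact hn'|]. lra. }
split; [exact Hanti|].
apply Rnot_lt_le. intro hlt.
set (tau := (b / m - b' / m') / 2).
set (x := scal3 (tau / m) n).
assert (E1 : dot n x = tau / m * dot n n) by (unfold x; destruct n as [[a1 a2] a3]; simpl; ring).
assert (E2 : dot n' x = tau / m * dot n n') by (unfold x; destruct n as [[a1 a2] a3]; destruct n' as [[b1 b2] b3]; simpl; ring).
rewrite <- q in E1. rewrite Hanti in E2.
replace (tau / m * (m * m)) with (tau * m) in E1 by (field; lra).
replace (tau / m * - (m * m')) with (- tau * m') in E2 by (field; lra).
assert (B1 : b = (b / m) * m) by (field; lra).
assert (B2 : b' = (b' / m') * m') by (field; lra).
apply (HD (Some x)). split.
- apply int_half; [exact hn|]. rewrite E1, B1. apply Rmult_lt_compat_r; [lra|]. unfold tau; lra.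
- apply int_half; [exact hn'|]. rewrite E2, B2. apply Rmult_lt_compat_r; [lra|]. unfold tau; lra.
Qed.
Open Scope R_scope.

Definition GOOD s t := L (vec s) (vec t) <= -1 /\
  (L (vec s) (vec t) = -1 -> vec t <> vopp (vec s) -> meet_in_one_point (den s) (den t)) /\
  (L (vec s) (vec t) < -1 -> ~ (exists p, den s p /\ den t p)).

Lemma div_m1 x y : 0 < y -> (x / y <= -1 <-> x <= - y) /\ (x / y = -1 <-> x = - y) /\ (x / y < -1 <-> x < - y).
Proof.
intro hy.
assert (E : x = (x / y) * y) by (field; lra).
split; [|split]; split; intro h.
- rewrite E. nra.
- apply (Rmult_le_reg_r y); [lra|]. rewrite <- E. lra.
- rewrite E, h; ring.
- rewrite h; field; lra.
- rewrite E. nra.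
- apply (Rmult_lt_reg_r y); [lra|]. rewrite <- E. lra.
Qed.

Lemma vopp_invol v : vopp (vopp v) = v.
Proof. destruct v; apply V5_eq; simpl; ring. Qed.

Lemma GOOD_sym s t : GOOD s t -> GOOD t s.
Proof.
intros (h1 & h2 & h3). unfold GOOD. rewrite (L_sym (vec t) (vec s)).
split; [exact h1|]. split.
- intros e hne. destruct (h2 e) as (p & hp1 & hp2 & hp3).
  + intro eq. apply hne. rewrite eq, vopp_invol. reflexivity.
  + exists p. split; [exact hp2|]. split; [exact hp1|]. intros q a b. apply hp3; assumption.
- intros e [p [a b]]. apply (h3 e). exists p; split; assumption.
Qed.

Lemma DI_sym A B : DI A B -> DI B A.
Proof. intros h p [a b]. apply (h p); split; assumption. Qed.

Lemma G_BB c1 r1 c2 r2 : 0 < r1 -> 0 < r2 -> DI (closed_ball c1 r1) (closed_ball c2 r2) -> GOOD (SBall c1 r1) (SBall c2 r2).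
Proof.
intros h1 h2 HD. pose proof (GC_BB c1 r1 c2 r2 h1 h2 HD) as gc.
unfold GOOD; simpl. rewrite LBB by lra.
destruct (div_m1 (r1*r1 + r2*r2 - dist2 c1 c2) (2*r1*r2) ltac:(nra)) as (D1 & D2 & D3).
set (d := dist2 c1 c2) in *.
set (t := r1 / (r1 + r2)).
assert (T1 : t * (r1 + r2) = r1) by (unfold t; field; lra).
assert (T2 : (1 - t) * (r1 + r2) = r2) by (unfold t; field; lra).
assert (ht : 0 < t) by (unfold t; apply Rdiv_lt_0_compat; lra).
assert (ht' : 0 < 1 - t) by nra.
set (p := add3 c1 (scal3 t (sub3 c2 c1))).
assert (St : forall x, dist2 x p = (1 - t) * dist2 x c1 + t * dist2 x c2 - t * (1 - t) * d).
{ intro x. unfold p, d. destruct c1 as [[a1 a2] a3]; destruct c2 as [[b1 b2] b3]; destruct x as [[x1 x2] x3];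
  unfold dist2; simpl; ring. }
assert (K : (1-t) * (r1*r1) + t * (r2*r2) - t * (1-t) * ((r1+r2)*(r1+r2)) = 0).
{ unfold t; field; lra. }
split; [|split].
- apply D1. nra.
- intros e _. apply D2 in e.
  assert (hd : d = (r1+r2)*(r1+r2)) by nra.
  exists (Some p). split; [|split].
  + simpl. assert (dist2 p c1 = t*t*d) by (unfold p, d; destruct c1 as [[a1 a2] a3]; destruct c2 as [[b1 b2] b3]; unfold dist2; simpl; ring). nra.
  + simpl. assert (dist2 p c2 = (1-t)*(1-t)*d) by (unfold p, d; destruct c1 as [[a1 a2] a3]; destruct c2 as [[b1 b2] b3]; unfold dist2; simpl; ring). nra.
  + intros [x|] qa qb; simpl in *; [|contradiction].
    f_equal. apply dist2_zero.
    pose proof (dist2_nonneg x p). rewrite St in *. rewrite hd in *.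
    assert ((1 - t) * dist2 x c1 <= (1-t) * (r1*r1)) by (apply Rmult_le_compat_l; lra).
    assert (t * dist2 x c2 <= t * (r2*r2)) by (apply Rmult_le_compat_l; lra).
    lra.
- intros e [[x|] [qa qb]]; simpl in *; [|contradiction].
  apply D3 in e.
  pose proof (dist2_nonneg x p). rewrite St in H.
  assert ((1 - t) * dist2 x c1 <= (1-t) * (r1*r1)) by (apply Rmult_le_compat_l; lra).
  assert (t * dist2 x c2 <= t * (r2*r2)) by (apply Rmult_le_compat_l; lra).
  assert (t * (1 - t) * ((r1+r2)*(r1+r2)) < t * (1-t) * d) by (apply Rmult_lt_compat_l; nra).
  lra.
Qed.

Lemma G_BE c1 r1 c2 r2 : 0 < r1 -> 0 < r2 -> DI (closed_ball c1 r1) (closed_exterior c2 r2) -> GOOD (SBall c1 r1) (SExt c2 r2).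
Proof.
intros h1 h2 HD. pose proof (GC_BE c1 r1 c2 r2 h1 h2 HD) as gc.
unfold GOOD; simpl. rewrite L_vopp_r, LBB by lra.
destruct (div_m1 (- (r1*r1 + r2*r2 - dist2 c1 c2)) (2*r1*r2) ltac:(nra)) as (D1 & D2 & D3).
replace (- ((r1 * r1 + r2 * r2 - dist2 c1 c2) / (2 * r1 * r2))) with
  (- (r1 * r1 + r2 * r2 - dist2 c1 c2) / (2 * r1 * r2)) by (field; lra).
destruct (dst_facts c1 c2) as [d0 d1].
set (dd := dst c1 c2) in *.
set (d := dist2 c1 c2) in *.
split; [|split].
- apply D1. nra.
- intros e hne. apply D2 in e.
  assert (hdd : dd = r2 - r1) by nra.
  destruct (Rle_lt_or_eq_dec 0 dd d0) as [dpos|dz].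
  + set (p := add3 c2 (scal3 (r2 / dd) (sub3 c1 c2))).
    set (t := dd / r2).
    assert (Ht : 1 - t = r1 / r2) by (unfold t; rewrite hdd; field; lra).
    assert (St : forall x, dist2 x c1 = (1 - t) * dist2 x c2 + t * dist2 x p - t * (1 - t) * dist2 p c2).
    { intro x. unfold p, t. destruct c1 as [[a1 a2] a3]; destruct c2 as [[b1 b2] b3]; destruct x as [[x1 x2] x3];
      unfold dist2; simpl; field; lra. }
    assert (P2 : dist2 p c2 = (r2 / dd) * (r2 / dd) * d).
    { unfold p, d. destruct c1 as [[a1 a2] a3]; destruct c2 as [[b1 b2] b3]; unfold dist2; simpl; ring. }
    assert (P1 : dist2 p c1 = (r2 / dd - 1) * (r2 / dd - 1) * d).
    { unfold p, d. destruct c1 as [[a1 a2] a3]; destruct c2 as [[b1 b2] b3]; unfold dist2; simpl; ring. }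
    rewrite <- d1 in P1, P2.
    replace (r2 / dd * (r2 / dd) * (dd * dd)) with (r2 * r2) in P2 by (field; lra).
    replace ((r2 / dd - 1) * (r2 / dd - 1) * (dd * dd)) with ((r2 - dd) * (r2 - dd)) in P1 by (field; lra).
    exists (Some p). split; [|split].
    * simpl. rewrite P1, hdd. nra.
    * simpl. rewrite P2. lra.
    * intros [x|] qa qb; simpl in *; [|contradiction].
      f_equal. apply dist2_zero.
      pose proof (dist2_nonneg x p). pose proof (St x) as S. rewrite P2 in S.
      assert (ht : 0 < t) by (unfold t; apply Rdiv_lt_0_compat; lra).
      assert ((1 - t) * (r2 * r2) <= (1-t) * dist2 x c2) by (apply Rmult_le_compat_l; [rewrite Ht; left; apply Rdiv_lt_0_compat; lra| lra]).
      assert (E0 : r1 * r1 - (1 - t) * (r2 * r2) + t * (1 - t) * (r2 * r2) = 0).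
      { rewrite Ht. unfold t. rewrite hdd. field. lra. }
      assert (t * dist2 x p <= 0) by lra.
      nra.
  + exfalso. apply hne.
    assert (c1 = c2) by (apply dist2_zero; fold d; rewrite <- d1, <- dz; ring). subst c2.
    assert (r1 = r2) by lra. subst r2. reflexivity.
- intros e [[x|] [qa qb]]; simpl in *; [|contradiction].
  apply D3 in e.
  assert (hdd : dd < r2 - r1) by nra.
  pose proof (tri x c1 c2) as T. fold dd in T.
  destruct (dst_facts x c1) as [e0 e1]. destruct (dst_facts x c2) as [f0 f1].
  assert (dst x c1 <= r1) by (apply le_of_sq; lra).
  assert (r2 <= dst x c2) by (apply le_of_sq; lra).
  lra.
Qed.

Lemma G_BH c r n b : 0 < r -> n <> zero3 -> DI (closed_ball c r) (closed_halfspace n b) -> GOOD (SBall c r) (SHalf n b).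
Proof.
intros hr hn HD. pose proof (GC_BH c r n b hr hn HD) as gc.
pose proof (nrm_pos n hn) as hm. pose proof (nrm_sq n) as hm2.
unfold GOOD; simpl. rewrite LBH by assumption.
set (m := nrm n) in *.
destruct (div_m1 (dot c n - b) (r * m) ltac:(nra)) as (D1 & D2 & D3).
split; [|split].
- apply D1. lra.
- intros e _. apply D2 in e.
  set (p := add3 c (scal3 (r / m) n)).
  assert (St : forall x, dist2 x p = dist2 x c - 2 * (r / m) * (dot n x - dot n c) + (r / m) * (r / m) * dot n n).
  { intro x. unfold p. destruct c as [[a1 a2] a3]; destruct n as [[b1 b2] b3]; destruct x as [[x1 x2] x3];
    unfold dist2; simpl; ring. }
  assert (P1 : dist2 p c = (r / m) * (r / m) * dot n n).
  { unfold p. destruct c as [[a1 a2] a3]; destruct n as [[b1 b2] b3]; unfold dist2; simpl; ring. }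
  assert (P2 : dot n p = dot n c + (r / m) * dot n n).
  { unfold p. destruct c as [[a1 a2] a3]; destruct n as [[b1 b2] b3]; simpl; ring. }
  rewrite <- hm2 in St, P1, P2.
  replace (r / m * (r / m) * (m * m)) with (r * r) in St, P1 by (field; lra).
  replace (r / m * (m * m)) with (r * m) in P2 by (field; lra).
  rewrite (dot_sym n c) in P2, St.
  exists (Some p). split; [|split].
  + simpl. lra.
  + simpl. lra.
  + intros [x|] qa qb; simpl in *; [|contradiction].
    f_equal. apply dist2_zero.
    pose proof (dist2_nonneg x p). rewrite St in *.
    assert (2 * (r / m) * (b - dot c n) <= 2 * (r / m) * (dot n x - dot c n)).
    { apply Rmult_le_compat_l; [|lra]. assert (0 < r / m) by (apply Rdiv_lt_0_compat; lra). lra. }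
    assert (2 * (r / m) * (b - dot c n) = 2 * r * r) by (rewrite <- (Rplus_0_r b); replace (b + 0 - dot c n) with (r * m) by lra; field; lra).
    lra.
- intros e [[x|] [qa qb]]; simpl in *; [|contradiction].
  apply D3 in e.
  pose proof (CS n (sub3 x c)) as hc.
  assert (E : dot n (sub3 x c) = dot n x - dot c n)
    by (destruct n as [[n1 n2] n3]; destruct x as [[x1 x2] x3]; destruct c as [[c1 c2] c3]; simpl; ring).
  assert (E2 : nrm (sub3 x c) = dst x c) by reflexivity.
  rewrite E, E2 in hc. fold m in hc.
  destruct (dst_facts x c) as [e0 e1].
  assert (dst x c <= r) by (apply le_of_sq; lra).
  assert (m * dst x c <= m * r) by (apply Rmult_le_compat_l; lra).
  lra.
Qed.

Lemma G_HH n b n' b' : n <> zero3 -> n' <> zero3 -> DI (closed_halfspace n b) (closed_halfspace n' b') -> GOOD (SHalf n b) (SHalf n' b').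
Proof.
intros hn hn' HD. destruct (GC_HH n b n' b' hn hn' HD) as [ha hs].
pose proof (antipar n n' hn hn' ha) as hap.
pose proof (nrm_pos n hn) as hm. pose proof (nrm_pos n' hn') as hm'.
unfold GOOD; simpl. rewrite LHH by assumption.
set (m := nrm n) in *. set (m' := nrm n') in *.
assert (L1 : dot n n' / (m * m') = -1) by (rewrite ha; field; lra).
rewrite L1.
split; [lra|split; [|lra]].
intros _ hne.
assert (hpos : 0 < b / m + b' / m').
{ destruct (Rle_lt_or_eq_dec _ _ hs) as [h|h]; [exact h|exfalso]. apply hne.
  unfold vecH. fold m m'. rewrite hap.
  destruct n as [[a1 a2] a3]; simpl. apply V5_eq; simpl.
  all: try (field; lra).
  all: lra. }
exists None. split; [exact I|]. split; [exact I|].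
intros [x|] qa qb; simpl in *; [|reflexivity].
exfalso.
assert (E : dot n' x = - (m' / m) * dot n x).
{ rewrite hap. destruct n as [[a1 a2] a3]; destruct x as [[x1 x2] x3]; simpl; ring. }
rewrite E in qb.
assert (b' / m' <= - (dot n x / m)).
{ apply (Rmult_le_reg_r m'); [lra|]. replace (b' / m' * m') with b' by (field; lra).
  replace (- (dot n x / m) * m') with (- (m' / m) * dot n x) by (field; lra). exact qb. }
assert (b / m <= dot n x / m).
{ apply Rmult_le_compat_r; [left; apply Rinv_0_lt_compat; lra| exact qa]. }
lra.
Qed.

Theorem geo s t : valid s -> valid t -> DI (den s) (den t) -> GOOD s t.
Proof.
destruct s as [c1 r1|c1 r1|n1 b1]; destruct t as [c2 r2|c2 r2|n2 b2]; intros h1 h2 HD; simpl in h1, h2.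
- apply G_BB; assumption.
- apply G_BE; assumption.
- apply G_BH; assumption.
- apply GOOD_sym, G_BE; try assumption. apply DI_sym; assumption.
- exfalso; exact (GC_EE c1 r1 c2 r2 h1 h2 HD).
- exfalso; exact (GC_EH c1 r1 n2 b2 h1 h2 HD).
- apply GOOD_sym, G_BH; try assumption. apply DI_sym; assumption.
- exfalso; exact (GC_EH c2 r2 n1 b1 h2 h1 (DI_sym _ _ HD)).
- apply G_HH; assumption.
Qed.
End Dev.

From mathcomp Require Import all_boot.
From mathcomp Require Import all_algebra.
From mathcomp Require Import Rstruct.
Import GRing.Theory.

Lemma dep6 (v : nat -> nat -> R) :
  exists g : nat -> R, (g 0%N <> 0%R \/ g 1%N <> 0%R \/ g 2%N <> 0%R \/ g 3%N <> 0%R \/ g 4%N <> 0%R \/ g 5%N <> 0%R) /\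
  forall j, (j < 5)%N -> (g 0%N * v 0%N j + g 1%N * v 1%N j + g 2%N * v 2%N j + g 3%N * v 3%N j + g 4%N * v 4%N j + g 5%N * v 5%N j = 0)%R.
Proof.
pose A : 'M[R]_(6,5) := (\matrix_(i < 6, j < 5) v i j)%R.
have hr : \rank A <= 5 := rank_leq_col A.
have : (kermx A != 0)%R.
  rewrite kermx_eq0 /row_free; apply/negP => /eqP h; move: hr; by rewrite h.
case/matrix0Pn => i [j hij].
have [gm hg hj] : exists2 gm : 'rV[R]_6, (gm *m A = 0)%R & (gm ord0 j != 0)%R.
  exists (row i (kermx A)); first by rewrite -row_mul mulmx_ker row0.
  by rewrite mxE.
have e0 : (ord0 : 'I_6) = inord 0 by apply/val_inj; rewrite /= inordK.
have e1 : (lift ord0 ord0 : 'I_6) = inord 1 by apply/val_inj; rewrite /= inordK.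
have e2 : (lift ord0 (lift ord0 ord0) : 'I_6) = inord 2 by apply/val_inj; rewrite /= inordK.
have e3 : (lift ord0 (lift ord0 (lift ord0 ord0)) : 'I_6) = inord 3 by apply/val_inj; rewrite /= inordK.
have e4 : (lift ord0 (lift ord0 (lift ord0 (lift ord0 ord0))) : 'I_6) = inord 4 by apply/val_inj; rewrite /= inordK.
have e5 : (lift ord0 (lift ord0 (lift ord0 (lift ord0 (lift ord0 ord0)))) : 'I_6) = inord 5 by apply/val_inj; rewrite /= inordK.
exists (fun k => gm ord0 (inord k)).
split.
- have hj' : (gm ord0 (inord j) != 0)%R by rewrite inord_val.
  clear hij hj; move: hj'; case: j => [[|[|[|[|[|[|k]]]]]] hk] /= hj; move/eqP: hj => hj; try by [].
  + by left. + by right; left. + by do 2 right; left. + by do 3 right; left. + by do 4 right; left. + by do 5 right.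
- move=> jj hjj.
  have := congr1 (fun M : 'M[R]_(1,5) => M ord0 (inord jj)) hg.
  rewrite !mxE !big_ord_recl big_ord0 /= !mxE /= inordK //.
  rewrite -e1 -e2 -e3 -e4 -e5 -e0 /=.
  move=> h; rewrite -[RHS]h. rewrite addr0. rewrite !addrA. reflexivity.
Qed.

Local Open Scope R_scope.

Definition comp5 (u : Dev.V5) (j : nat) : R :=
  match j with 0 => Dev.c1 u | 1 => Dev.c2 u | 2 => Dev.c3 u | 3 => Dev.c4 u | _ => Dev.c5 u end.

Lemma dep_ok : Dev.DEP.
Proof.
move=> v0 v1 v2 v3 v4 v5.
pose vs (k : nat) := match k with 0 => v0 | 1 => v1 | 2 => v2 | 3 => v3 | 4 => v4 | _ => v5 end.
have [g [Hnz Hrel]] := dep6 (fun k j => comp5 (vs k) j).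
exists (g 0%N), (g 1%N), (g 2%N), (g 3%N), (g 4%N), (g 5%N); split; first exact Hnz.
move=> u.
have r0 : g 0%N * Dev.c1 v0 + g 1%N * Dev.c1 v1 + g 2%N * Dev.c1 v2 + g 3%N * Dev.c1 v3 + g 4%N * Dev.c1 v4 + g 5%N * Dev.c1 v5 = 0 := Hrel 0%N isT.
have r1 : g 0%N * Dev.c2 v0 + g 1%N * Dev.c2 v1 + g 2%N * Dev.c2 v2 + g 3%N * Dev.c2 v3 + g 4%N * Dev.c2 v4 + g 5%N * Dev.c2 v5 = 0 := Hrel 1%N isT.
have r2 : g 0%N * Dev.c3 v0 + g 1%N * Dev.c3 v1 + g 2%N * Dev.c3 v2 + g 3%N * Dev.c3 v3 + g 4%N * Dev.c3 v4 + g 5%N * Dev.c3 v5 = 0 := Hrel 2%N isT.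
have r3 : g 0%N * Dev.c4 v0 + g 1%N * Dev.c4 v1 + g 2%N * Dev.c4 v2 + g 3%N * Dev.c4 v3 + g 4%N * Dev.c4 v4 + g 5%N * Dev.c4 v5 = 0 := Hrel 3%N isT.
have r4 : g 0%N * Dev.c5 v0 + g 1%N * Dev.c5 v1 + g 2%N * Dev.c5 v2 + g 3%N * Dev.c5 v3 + g 4%N * Dev.c5 v4 + g 5%N * Dev.c5 v5 = 0 := Hrel 4%N isT.
rewrite /Dev.L.
move: r0 r1 r2 r3 r4. clear.
move: (Dev.c1 u) (Dev.c2 u) (Dev.c3 u) (Dev.c4 u) (Dev.c5 u) => u1 u2 u3 u4 u5.
move=> r0 r1 r2 r3 r4.
move: r0 => /(f_equal (Rmult u1)) r0.
move: r1 => /(f_equal (Rmult u2)) r1.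
move: r2 => /(f_equal (Rmult u3)) r2.
move: r3 => /(f_equal (Rmult u4)) r3.
move: r4 => /(f_equal (Rmult u5)) r4.
lra.
Qed.

Lemma rep (X : pt -> Prop) : is_3ball X -> exists s, Dev.valid s /\ same_set X (Dev.den s).
Proof.
case=> [[c [r [hr hs]]]|[[c [r [hr hs]]]|[n [b [hn hs]]]]].
- by exists (Dev.SBall c r).
- by exists (Dev.SExt c r).
- by exists (Dev.SHalf n b).
Qed.

Lemma same_sym X Y : same_set X Y -> same_set Y X.
Proof. move=> h p; split=> q; [exact: (proj2 (h p) q) | exact: (proj1 (h p) q)]. Qed.

Lemma int_tr X Y p : same_set X Y -> Defs.interior X p -> Defs.interior Y p.
Proof. move=> h [e [he H]]; exists e; split=> // q hq; exact: (proj1 (h q) (H q hq)). Qed.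

Lemma meet_tr X X' Y Y' : same_set X X' -> same_set Y Y' -> meet_in_one_point X Y -> meet_in_one_point X' Y'.
Proof.
move=> hx hy [p [a [b c]]]; exists p; split; first exact: (proj1 (hx p) a).
split; first exact: (proj1 (hy p) b).
move=> q qa qb; apply: c; [exact: (proj2 (hx q) qa) | exact: (proj2 (hy q) qb)].
Qed.

Lemma C4_irr (z : 'I_4) : C4 z z = false.
Proof. by case: z => [[|[|[|[|k]]]] hk]. Qed.

Lemma iso_from (G : rel 'I_4) (M : nat -> nat -> R) :
  irreflexive G -> (forall x y : 'I_4, x <> y -> (G x y <-> M x y = -1)) ->
  (forall i k, M i k = M k i) -> Dev.pattern M -> graph_iso4 G C4.
Proof.
move=> Hirr HGM Hs Hp.
have T (x y : 'I_4) : x <> y -> M x y = -1 -> G x y = true by move=> h e; exact: (proj2 (HGM x y h) e).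
have F (x y : 'I_4) : x <> y -> M x y < -1 -> G x y = false.
  move=> h l; apply/negbTE/negP => g; have := proj1 (HGM x y h) g; lra.
have N (x y : 'I_4) : nat_of_ord x != nat_of_ord y -> x <> y by move=> h e; rewrite e eqxx in h.
have key (g : nat -> nat) : (forall k, (k < 4)%N -> (g k < 4)%N) -> (forall k, (k < 4)%N -> g (g k) = k) ->
   (forall x y : 'I_4, x != y -> G x y = C4 (inord (g x)) (inord (g y))) -> graph_iso4 G C4.
  move=> g4 gg H. exists (fun x : 'I_4 => (inord (g x) : 'I_4)); split.
  - exists (fun x : 'I_4 => (inord (g x) : 'I_4)) => x; apply/val_inj; rewrite /= !inordK ?gg //; apply: g4 => //.
  - move=> x y; case: (eqVneq x y) => [->|hxy]; last exact: H.
    by rewrite Hirr C4_irr.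
case: Hp => [[p1 [p2 [p3 [p4 [p5 p6]]]]]|[[p1 [p2 [p3 [p4 [p5 p6]]]]]|[p1 [p2 [p3 [p4 [p5 p6]]]]]]].
- apply: (key (fun k => match k with 1 => 2 | 2 => 1 | k => k end)%N).
  + by move=> [|[|[|[|k]]]].
  + by move=> [|[|[|[|k]]]].
  + move=> x y; case: x => [[|[|[|[|x]]]] hx] //; case: y => [[|[|[|[|y]]]] hy] // hne.
    all: try first [ by exfalso; move/negP: hne; apply; apply/eqP; apply: val_inj
               | by rewrite (T (Ordinal hx) (Ordinal hy) (N (Ordinal hx) (Ordinal hy) isT) ltac:(simpl; rewrite ?(Hs 1%N 0%N) ?(Hs 2%N 0%N) ?(Hs 3%N 0%N) ?(Hs 2%N 1%N) ?(Hs 3%N 1%N) ?(Hs 3%N 2%N); lra)) /C4 /= !inordK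
               | by rewrite (F (Ordinal hx) (Ordinal hy) (N (Ordinal hx) (Ordinal hy) isT) ltac:(simpl; rewrite ?(Hs 1%N 0%N) ?(Hs 2%N 0%N) ?(Hs 3%N 0%N) ?(Hs 2%N 1%N) ?(Hs 3%N 1%N) ?(Hs 3%N 2%N); lra)) /C4 /= !inordK ].
- apply: (key (fun k => k)).
  + by move=> k.
  + by move=> k.
  + move=> x y; case: x => [[|[|[|[|x]]]] hx] //; case: y => [[|[|[|[|y]]]] hy] // hne.
    all: try first [ by exfalso; move/negP: hne; apply; apply/eqP; apply: val_inj
               | by rewrite (T (Ordinal hx) (Ordinal hy) (N (Ordinal hx) (Ordinal hy) isT) ltac:(simpl; rewrite ?(Hs 1%N 0%N) ?(Hs 2%N 0%N) ?(Hs 3%N 0%N) ?(Hs 2%N 1%N) ?(Hs 3%N 1%N) ?(Hs 3%N 2%N); lra)) /C4 /= !inordK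
               | by rewrite (F (Ordinal hx) (Ordinal hy) (N (Ordinal hx) (Ordinal hy) isT) ltac:(simpl; rewrite ?(Hs 1%N 0%N) ?(Hs 2%N 0%N) ?(Hs 3%N 0%N) ?(Hs 2%N 1%N) ?(Hs 3%N 1%N) ?(Hs 3%N 2%N); lra)) /C4 /= !inordK ].
- apply: (key (fun k => match k with 2 => 3 | 3 => 2 | k => k end)%N).
  + by move=> [|[|[|[|k]]]].
  + by move=> [|[|[|[|k]]]].
  + move=> x y; case: x => [[|[|[|[|x]]]] hx] //; case: y => [[|[|[|[|y]]]] hy] // hne.
    all: try first [ by exfalso; move/negP: hne; apply; apply/eqP; apply: val_inj
               | by rewrite (T (Ordinal hx) (Ordinal hy) (N (Ordinal hx) (Ordinal hy) isT) ltac:(simpl; rewrite ?(Hs 1%N 0%N) ?(Hs 2%N 0%N) ?(Hs 3%N 0%N) ?(Hs 2%N 1%N) ?(Hs 3%N 1%N) ?(Hs 3%N 2%N); lra)) /C4 /= !inordK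
               | by rewrite (F (Ordinal hx) (Ordinal hy) (N (Ordinal hx) (Ordinal hy) isT) ltac:(simpl; rewrite ?(Hs 1%N 0%N) ?(Hs 2%N 0%N) ?(Hs 3%N 0%N) ?(Hs 2%N 1%N) ?(Hs 3%N 1%N) ?(Hs 3%N 2%N); lra)) /C4 /= !inordK ].
Qed.

Lemma inl_neq (i k : nat) : (i < 4)%coq_nat -> (k < 4)%coq_nat -> i <> k ->
  (inl (inord i) : 'I_4 + 'I_4) <> inl (inord k).
Proof.
move=> /ltP hi /ltP hk hik e. apply: hik.
case: e => /(congr1 val) /=. by rewrite !inordK.
Qed.

Lemma inr_neq (i k : nat) : (i < 4)%coq_nat -> (k < 4)%coq_nat -> i <> k ->
  (inr (inord i) : 'I_4 + 'I_4) <> inr (inord k).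
Proof.
move=> /ltP hi /ltP hk hik e. apply: hik.
case: e => /(congr1 val) /=. by rewrite !inordK.
Qed.

Theorem corollary3p10 (G G' : rel 'I_4) :
  simple_graph4 G -> simple_graph4 G' ->
  ball3_packable (graph_join G G') ->
  graph_iso4 G C4 /\ graph_iso4 G' C4.
Proof.
move=> [Gsym Girr] [G'sym G'irr] [B [HB [HD HT]]].
pose sh v := proj1_sig (constructive_indefinite_description _ (rep _ (HB v))).
have Hsh v : Dev.valid (sh v) /\ same_set (B v) (Dev.den (sh v)) :=
  proj2_sig (constructive_indefinite_description _ (rep _ (HB v))).
have HDI u v : u <> v -> Dev.DI (Dev.den (sh u)) (Dev.den (sh v)).
  move=> huv p [i1 i2]. apply: (HD u v huv p). split.
  - exact: (int_tr _ _ _ (same_sym _ _ (proj2 (Hsh u))) i1).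
  - exact: (int_tr _ _ _ (same_sym _ _ (proj2 (Hsh v))) i2).
have HG u v : u <> v -> Dev.GOOD (sh u) (sh v).
  move=> h; exact: (Dev.geo _ _ (proj1 (Hsh u)) (proj1 (Hsh v)) (HDI u v h)).
pose V u := Dev.vec (sh u).
have adjL u v : u <> v -> graph_join G G' u v -> Dev.L (V u) (V v) = -1.
  move=> huv hadj.
  have hm : meet_in_one_point (Dev.den (sh u)) (Dev.den (sh v)) :=
    meet_tr _ _ _ _ (proj2 (Hsh u)) (proj2 (Hsh v)) (proj1 (HT u v huv) hadj).
  case: (HG u v huv) => [h1 [h2 h3]].
  case: (Rle_lt_or_eq_dec _ _ h1) => // hlt. exfalso. apply: (h3 hlt).
  case: hm => p [a [b _]]; by exists p.
have nadjL u v : u <> v -> ~ graph_join G G' u v -> Dev.L (V u) (V v) = -1 -> V v = Dev.vopp (V u).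
  move=> huv hn he. case: (classic (V v = Dev.vopp (V u))) => // hne. exfalso; apply: hn.
  apply: (proj2 (HT u v huv)).
  apply: (meet_tr _ _ _ _ (same_sym _ _ (proj2 (Hsh u))) (same_sym _ _ (proj2 (Hsh v)))).
  exact: ((proj1 (proj2 (HG u v huv))) he hne).
pose a (i : nat) := V (inl (inord i)).
pose b (i : nat) := V (inr (inord i)).
have Hna i : (i < 4)%coq_nat -> Dev.L (a i) (a i) = 1 by move=> _; exact: Dev.vec_norm (proj1 (Hsh _)).
have Hnb i : (i < 4)%coq_nat -> Dev.L (b i) (b i) = 1 by move=> _; exact: Dev.vec_norm (proj1 (Hsh _)).
have Hc i j : (i < 4)%coq_nat -> (j < 4)%coq_nat -> Dev.L (a i) (b j) = -1 by move=> _ _; exact: adjL.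
have Hc' i j : (i < 4)%coq_nat -> (j < 4)%coq_nat -> Dev.L (b i) (a j) = -1.
  by move=> _ _; rewrite Dev.L_sym; exact: adjL.
have Ha i k : (i < 4)%coq_nat -> (k < 4)%coq_nat -> i <> k -> Dev.L (a i) (a k) <= -1.
  move=> hi hk hik; exact: (proj1 (HG _ _ (inl_neq i k hi hk hik))).
have Hb i k : (i < 4)%coq_nat -> (k < 4)%coq_nat -> i <> k -> Dev.L (b i) (b k) <= -1.
  move=> hi hk hik; exact: (proj1 (HG _ _ (inr_neq i k hi hk hik))).
have patA := Dev.side dep_ok a b Hna Hnb Hc Ha Hb.
have patB := Dev.side dep_ok b a Hnb Hna Hc' Hb Ha.
split.
- apply: (iso_from G (fun i k => Dev.L (a i) (a k)) Girr); last exact: patA.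
  + move=> x y hxy. rewrite /a !inord_val. split.
    * move=> hG. apply: adjL; [by case | exact: hG].
    * move=> he. case hG : (G x y) => //. exfalso.
      have eq := nadjL (inl x) (inl y) ltac:(by case) ltac:(by rewrite /= hG) he.
      have h1 := adjL (inl x) (inr ord0) ltac:(by []) I.
      have h2 := adjL (inl y) (inr ord0) ltac:(by []) I.
      rewrite eq Dev.L_vopp_l in h2. lra.
  + move=> i k; exact: Dev.L_sym.
- apply: (iso_from G' (fun i k => Dev.L (b i) (b k)) G'irr); last exact: patB.
  + move=> x y hxy. rewrite /b !inord_val. split.
    * move=> hG. apply: adjL; [by case | exact: hG].
    * move=> he. case hG : (G' x y) => //. exfalso.
      have eq := nadjL (inr x) (inr y) ltac:(by case) ltac:(by rewrite /= hG) he.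
      have h1 := adjL (inr x) (inl ord0) ltac:(by []) I.
      have h2 := adjL (inr y) (inl ord0) ltac:(by []) I.
      rewrite eq Dev.L_vopp_l in h2. lra.
  + move=> i k; exact: Dev.L_sym.
Qed.
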